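(* For all configurations $C, C'$ of the NFB machine, $C \approx C'$ (machine bisimilarity) if and only if $[\![C]\!] \approx_H [\![C']\!]$ (HOcore barbed equivalence with respect to the set $H = \{c, hd, b, k, init, rec, ch\}$ of hidden names).
   Context: HOcore: processes $P,Q ::= a(x).P \mid \overline{a}\langle P\rangle \mid P \parallel Q \mid x \mid 0$ ($a$ channel names, $x$ process variables, $a(x).P$ binds $x$, $a(\_).P$ when $x$ is unused, $\parallel$ associative and commutative with unit $0$, $\mathrm{fn}(P)$ the free names). LTS: $\overline{a}\langle P\rangle \xrightarrow{\overline{a}\langle P\rangle} 0$; $a(x).Q \xrightarrow{a(P)} Q\{P/x\}$; if $P \xrightarrow{l} P'$ then $P\parallel Q \xrightarrow{l} P'\parallel Q$ (and symmetrically); if $P \xrightarrow{\overline{a}\langle R\rangle} P'$ and $Q \xrightarrow{a(R)} Q'$ then $P \parallel Q \xrightarrow{\tau} P'\parallel Q'$ (and symmetrically). $\Rightarrow$ is the reflexive transitive closure of $\xrightarrow{\tau}$. For a finite set $H$: $P\downarrow^H_a$ (resp. $P\downarrow^H_{\overline a}$) if $a\notin H$ and $P\xrightarrow{a(Q)}R$ (resp. $P\xrightarrow{\overline a\langle Q\rangle}R$) for some $Q,R$; $P\Downarrow^H_\mu$ if $P\Rightarrow P'\downarrow^H_\mu$. A barbed bisimulation w.r.t. $H$ is a symmetric relation $\mathcal R$ such that $P\mathcal RQ$ implies: $P\downarrow^H_\mu$ implies $Q\Downarrow^H_\mu$; for all $R$ with $\mathrm{fn}(R)\cap H=\emptyset$,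 $(P\parallel R)\mathcal R(Q\parallel R)$; if $P\xrightarrow\tau P'$ then $Q\Rightarrow Q'$ with $P'\mathcal RQ'$. $\approx_H$ is the largest barbed bisimulation w.r.t. $H$. Terms: $t,s ::= f \mid x \mid \lambda x.t \mid t\,s$ ($f$ free variables identified with natural numbers, $x$ bound variables, terms well formed). Stacks $\pi ::= t::\pi\mid[]$. NFB machine: configurations $\langle t,\pi,n\rangle_{\mathrm{ev}}$ and $\langle \pi, n\rangle_{\mathrm{cont}}$; transitions: $\langle t\,s,\pi,n\rangle_{\mathrm{ev}} \xrightarrow{\tau} \langle t, s::\pi, n\rangle_{\mathrm{ev}}$; $\langle \lambda x.t, s::\pi, n\rangle_{\mathrm{ev}} \xrightarrow{\tau} \langle t\{s/x\},\pi,n\rangle_{\mathrm{ev}}$; $\langle \lambda x.t, [], n\rangle_{\mathrm{ev}} \xrightarrow{\lambda} \langle t\{n/x\}, [], n+1\rangle_{\mathrm{ev}}$; $\langle f, \pi, n\rangle_{\mathrm{ev}} \xrightarrow{f} \langle \pi, n\rangle_{\mathrm{cont}}$; $\langle [], n\rangle_{\mathrm{cont}} \xrightarrow{\mathsf{done}}$ (terminating); $\langle t::\pi, n\rangle_{\mathrm{cont}} \xrightarrow{\mathsf{enter}} \langle t, [], n\rangle_{\mathrm{ev}}$; $\langle t::\pi, n\rangle_{\mathrm{cont}} \xrightarrow{\mathsf{skip}} \langle \pi, n\rangle_{\mathrm{cont}}$. Machine bisimulation: symmetric $\mathcal R$ such that $C_1\mathcal RC_2$ implies for every flag $F$: if $C_1\xrightarrow\tau^*\xrightarrow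 F C_1'$ then $C_2\xrightarrow\tau^*\xrightarrow F C_2'$ with $C_1'\mathcal RC_2'$; if $C_1\xrightarrow\tau^*\xrightarrow F$ (terminating) then $C_2\xrightarrow\tau^*\xrightarrow F$ (terminating). $\approx$ is the largest machine bisimulation. Translation into HOcore, using channel names $c, hd, b, k, init, rec, ch$ and flag names $\lambda, \mathsf{enter}, \mathsf{skip}, \mathsf{done}, suc, z$ (bound $\lambda$-variables become process variables; $p$ is a fresh variable). Internal choice: $P + Q = \overline{ch}\langle P\rangle \parallel \overline{ch}\langle Q\rangle \parallel ch(x).ch(\_).x$. Numbers: $[0] = z(\_).\overline{init}\langle 0\rangle$, $[n+1] = suc(\_).[n]$. $[\![t\,s]\!] = c(p).([\![t]\!] \parallel \overline{c}\langle \overline{hd}\langle[\![s]\!]\rangle \parallel \overline{c}\langle p\rangle\rangle)$; $[\![\lambda x.t]\!] = c(p).(p \parallel \overline{b}\langle \mathit{Restart}\rangle \parallel hd(x).b(\_).[\![t]\!])$; $[\![x]\!] = x$; $[\![f]\!] = [f]$; $\mathit{Restart} = \lambda(\_).k(x).(\overline{hd}\langle x\rangle \parallel \overline{k}\langle suc(\_).x\rangle \parallel \overline{c}\langle[\![[]]\!]\rangle \parallel \overline{b}\langle 0\rangle)$; $\mathit{Rec} = init(\_).rec(x).(x \parallel \overline{rec}\langle x\rangle \parallel \mathit{Cont})$; $\mathit{Cont} = c(p).(p \parallel \overline{b}\langle \mathsf{done}(\_).0\rangle \parallel hd(x).b(\_).\mathit{Choice}(x))$; $\mathit{Choice}(P)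 = \mathsf{enter}(\_).c(\_).(P \parallel \overline{c}\langle[\![[]]\!]\rangle) + \mathsf{skip}(\_).\overline{init}\langle 0\rangle$; $[\![[]]\!] = b(x).x$; $[\![t::\pi]\!] = \overline{hd}\langle[\![t]\!]\rangle \parallel \overline{c}\langle[\![\pi]\!]\rangle$; $[\![\langle t,\pi,n\rangle_{\mathrm{ev}}]\!] = [\![t]\!] \parallel \overline{c}\langle[\![\pi]\!]\rangle \parallel \overline{k}\langle [n]\rangle \parallel \mathit{Rec} \parallel \overline{rec}\langle\mathit{Rec}\rangle$; $[\![\langle \pi,n\rangle_{\mathrm{cont}}]\!] = \overline{c}\langle[\![\pi]\!]\rangle \parallel \overline{k}\langle [n]\rangle \parallel \mathit{Cont} \parallel \mathit{Rec} \parallel \overline{rec}\langle\mathit{Rec}\rangle$. *)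

(* Defs.v *)
(* HOcore, the NFB machine, and the translation of the
   machine into HOcore. Binders are represented with de Bruijn indices
   (HOcore process variables) and locally nameless terms (lambda terms). *)
From Stdlib Require Import List Arith.
Import ListNotations.

Inductive name : Type :=
  | Nc | Nhd | Nb | Nk | Ninit | Nrec | Nch
  | Nlam | Nenter | Nskip | Ndone | Nsuc | Nz       (* flag names *)
  | Nother (i : nat).

Definition name_eq_dec (a b : name) : {a = b} + {a <> b}.
Proof. decide equality; apply Nat.eq_dec. Defined.

(* Processes: a(x).P binds de Bruijn index 0 in P. *)
Inductive proc : Type :=
  | PNil : proc
  | PVar : nat -> proc
  | PIn  : name -> proc -> proc
  | POut : name -> proc -> proc
  | PPar : proc -> proc -> proc.

Definition up_ren (r : nat -> nat) (i : nat) : nat :=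
  match i with 0 => 0 | S j => S (r j) end.

Fixpoint rename (r : nat -> nat) (P : proc) : proc :=
  match P with
  | PNil => PNil
  | PVar i => PVar (r i)
  | PIn a Q => PIn a (rename (up_ren r) Q)
  | POut a Q => POut a (rename r Q)
  | PPar Q1 Q2 => PPar (rename r Q1) (rename r Q2)
  end.

Definition lift (k : nat) (P : proc) : proc := rename (fun i => i + k) P.

Fixpoint subst_rec (k : nat) (R : proc) (Q : proc) : proc :=
  match Q with
  | PNil => PNil
  | PVar i =>
      if Nat.eq_dec i k then lift k R
      else if Nat.ltb k i then PVar (pred i) else PVar i
  | PIn a Q' => PIn a (subst_rec (S k) R Q')
  | POut a Q' => POut a (subst_rec k R Q')
  | PPar Q1 Q2 => PPar (subst_rec k R Q1) (subst_rec k R Q2)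
  end.

(* Q{R/x} where x is the variable bound by the input prefix *)
Definition subst (Q R : proc) : proc := subst_rec 0 R Q.

Fixpoint fn (P : proc) : list name :=
  match P with
  | PNil => []
  | PVar _ => []
  | PIn a Q => a :: fn Q
  | POut a Q => a :: fn Q
  | PPar Q1 Q2 => fn Q1 ++ fn Q2
  end.

Inductive label : Type :=
  | LIn  : name -> proc -> label
  | LOut : name -> proc -> label
  | LTau : label.

Inductive lts : proc -> label -> proc -> Prop :=
  | lts_out : forall a P, lts (POut a P) (LOut a P) PNil
  | lts_in : forall a Q P, lts (PIn a Q) (LIn a P) (subst Q P)
  | lts_parL : forall P Q l P', lts P l P' -> lts (PPar P Q) l (PPar P' Q)
  | lts_parR : forall P Q l Q', lts Q l Q' -> lts (PPar P Q) l (PPar P Q')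
  | lts_commL : forall P Q a R P' Q',
      lts P (LOut a R) P' -> lts Q (LIn a R) Q' -> lts (PPar P Q) LTau (PPar P' Q')
  | lts_commR : forall P Q a R P' Q',
      lts P (LIn a R) P' -> lts Q (LOut a R) Q' -> lts (PPar P Q) LTau (PPar P' Q').

Inductive taus : proc -> proc -> Prop :=
  | taus_refl : forall P, taus P P
  | taus_step : forall P P' P'', lts P LTau P' -> taus P' P'' -> taus P P''.

Inductive barb : Type := BIn (a : name) | BOut (a : name).

Definition has_barb (H : list name) (P : proc) (mu : barb) : Prop :=
  match mu with
  | BIn a => ~ In a H /\ exists Q R, lts P (LIn a Q) R
  | BOut a => ~ In a H /\ exists Q R, lts P (LOut a Q) R
  end.

Definition has_wbarb (H : list name) (P : proc) (mu : barb) : Prop :=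
  exists P', taus P P' /\ has_barb H P' mu.

Definition barbed_bisimulation (H : list name) (Rel : proc -> proc -> Prop) : Prop :=
  (forall P Q, Rel P Q -> Rel Q P) /\
  (forall P Q, Rel P Q ->
     (forall mu, has_barb H P mu -> has_wbarb H Q mu) /\
     (forall R, (forall a, In a (fn R) -> ~ In a H) -> Rel (PPar P R) (PPar Q R)) /\
     (forall P', lts P LTau P' -> exists Q', taus Q Q' /\ Rel P' Q')).

Definition barbed_equiv (H : list name) (P Q : proc) : Prop :=
  exists Rel, barbed_bisimulation H Rel /\ Rel P Q.

Inductive term : Type :=
  | TFree : nat -> term
  | TBound : nat -> term
  | TLam : term -> term          (* \x. t, binds index 0 *)
  | TApp : term -> term -> term.

Fixpoint wf_at (d : nat) (t : term) : Prop :=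
  match t with
  | TFree _ => True
  | TBound i => i < d
  | TLam t' => wf_at (S d) t'
  | TApp t1 t2 => wf_at d t1 /\ wf_at d t2
  end.

Definition wf_term (t : term) : Prop := wf_at 0 t.

Fixpoint open_rec (k : nat) (u : term) (t : term) : term :=
  match t with
  | TFree f => TFree f
  | TBound i => if Nat.eq_dec i k then u else TBound i
  | TLam t' => TLam (open_rec (S k) u t')
  | TApp t1 t2 => TApp (open_rec k u t1) (open_rec k u t2)
  end.

Definition open (t u : term) : term := open_rec 0 u t.

Definition stack := list term.

Inductive conf : Type :=
  | Ev : term -> stack -> nat -> conf
  | Co : stack -> nat -> conf.

Definition wf_conf (C : conf) : Prop :=
  match C with
  | Ev t pi _ => wf_term t /\ Forall wf_term pi
  | Co pi _ => Forall wf_term pi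
  end.

Inductive flag : Type :=
  | FLam | FVar (f : nat) | FEnter | FSkip | FDone.

Inductive mtau : conf -> conf -> Prop :=
  | mtau_app : forall t s pi n, mtau (Ev (TApp t s) pi n) (Ev t (s :: pi) n)
  | mtau_beta : forall t s pi n, mtau (Ev (TLam t) (s :: pi) n) (Ev (open t s) pi n).

Inductive mflag : conf -> flag -> conf -> Prop :=
  | mflag_lam : forall t n, mflag (Ev (TLam t) [] n) FLam (Ev (open t (TFree n)) [] (S n))
  | mflag_var : forall f pi n, mflag (Ev (TFree f) pi n) (FVar f) (Co pi n)
  | mflag_enter : forall t pi n, mflag (Co (t :: pi) n) FEnter (Ev t [] n)
  | mflag_skip : forall t pi n, mflag (Co (t :: pi) n) FSkip (Co pi n).

Inductive mterm : conf -> flag -> Prop :=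
  | mterm_done : forall n, mterm (Co [] n) FDone.

Inductive mtaus : conf -> conf -> Prop :=
  | mtaus_refl : forall C, mtaus C C
  | mtaus_step : forall C C' C'', mtau C C' -> mtaus C' C'' -> mtaus C C''.

Definition machine_bisimulation (Rel : conf -> conf -> Prop) : Prop :=
  (forall C1 C2, Rel C1 C2 -> Rel C2 C1) /\
  (forall C1 C2, Rel C1 C2 -> forall F,
     (forall C1m C1', mtaus C1 C1m -> mflag C1m F C1' ->
        exists C2m C2', mtaus C2 C2m /\ mflag C2m F C2' /\ Rel C1' C2') /\
     (forall C1m, mtaus C1 C1m -> mterm C1m F ->
        exists C2m, mtaus C2 C2m /\ mterm C2m F)).

Definition mbisimilar (C1 C2 : conf) : Prop :=
  exists Rel, machine_bisimulation Rel /\ Rel C1 C2.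

(* P + Q = \bar ch<P> || \bar ch<Q> || ch(x).ch(_).x *)
Definition choice_plus (P Q : proc) : proc :=
  PPar (POut Nch P) (PPar (POut Nch Q) (PIn Nch (PIn Nch (PVar 1)))).

Fixpoint tr_num (n : nat) : proc :=
  match n with
  | 0 => PIn Nz (POut Ninit PNil)
  | S m => PIn Nsuc (tr_num m)
  end.

Definition tr_nil : proc := PIn Nb (PVar 0).

(* Restart = lam(_).k(x).(\bar hd<x> || \bar k<suc(_).x> || \bar c<[[[]]]> || \bar b<0>) *)
Definition Restart : proc :=
  PIn Nlam (PIn Nk
    (PPar (POut Nhd (PVar 0))
    (PPar (POut Nk (PIn Nsuc (PVar 1)))
    (PPar (POut Nc tr_nil)
          (POut Nb PNil))))).

(* lambda variable 0 of the body becomes x (index 1 under hd(x).b(_)),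
   the others are shifted past the three binders c(p), hd(x), b(_) *)
Definition lam_ren (i : nat) : nat :=
  match i with 0 => 1 | S j => j + 3 end.

(* Term translation; the lambda-bound variable with de Bruijn index i
   becomes the process variable with de Bruijn index i (then adjusted
   under the extra HOcore binders). *)
Fixpoint tr_term (t : term) : proc :=
  match t with
  | TFree f => tr_num f
  | TBound i => PVar i
  | TApp t1 t2 =>
      (* c(p).([[t]] || \bar c< \bar hd<[[s]]> || \bar c<p> >) *)
      PIn Nc (PPar (lift 1 (tr_term t1))
                   (POut Nc (PPar (POut Nhd (lift 1 (tr_term t2)))
                                  (POut Nc (PVar 0)))))
  | TLam t' =>
      (* c(p).(p || \bar b<Restart> || hd(x).b(_).[[t]]) *)
      PIn Nc (PPar (PVar 0)
                   (PPar (POut Nb Restart)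
                         (PIn Nhd (PIn Nb (rename lam_ren (tr_term t'))))))
  end.

(* Choice(P) = enter(_).c(_).(P || \bar c<[[[]]]>) + skip(_).\bar init<0> *)
Definition Choice (P : proc) : proc :=
  choice_plus (PIn Nenter (PIn Nc (PPar (lift 2 P) (POut Nc tr_nil))))
              (PIn Nskip (POut Ninit PNil)).

(* Cont = c(p).(p || \bar b<done(_).0> || hd(x).b(_).Choice(x)) *)
Definition Cont : proc :=
  PIn Nc (PPar (PVar 0)
         (PPar (POut Nb (PIn Ndone PNil))
               (PIn Nhd (PIn Nb (Choice (PVar 1)))))).

(* Rec = init(_).rec(x).(x || \bar rec<x> || Cont) *)
Definition Rec : proc :=
  PIn Ninit (PIn Nrec (PPar (PVar 0) (PPar (POut Nrec (PVar 0)) Cont))).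

Fixpoint tr_stack (pi : stack) : proc :=
  match pi with
  | [] => tr_nil
  | t :: pi' => PPar (POut Nhd (tr_term t)) (POut Nc (tr_stack pi'))
  end.

Definition tr_conf (C : conf) : proc :=
  match C with
  | Ev t pi n =>
      PPar (tr_term t) (PPar (POut Nc (tr_stack pi))
        (PPar (POut Nk (tr_num n)) (PPar Rec (POut Nrec Rec))))
  | Co pi n =>
      PPar (POut Nc (tr_stack pi)) (PPar (POut Nk (tr_num n))
        (PPar Cont (PPar Rec (POut Nrec Rec))))
  end.

Definition Hhid : list name := [Nc; Nhd; Nb; Nk; Ninit; Nrec; Nch].

(* Main.v *)
Require Import Defs.
From Stdlib Require Import List Arith Lia Permutation.
Import ListNotations.

Fixpoint closed_at (d : nat) (P : proc) : Prop :=
  match P with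
  | PNil => True
  | PVar i => i < d
  | PIn _ Q => closed_at (S d) Q
  | POut _ Q => closed_at d Q
  | PPar Q1 Q2 => closed_at d Q1 /\ closed_at d Q2
  end.

Lemma rename_ext : forall P r r', (forall i, r i = r' i) -> rename r P = rename r' P.
Proof.
  induction P; intros r r' H; simpl; f_equal; auto.
  apply IHP. intros [|i]; simpl; auto.
Qed.

Lemma rename_id_closed : forall P d r, closed_at d P -> (forall i, i < d -> r i = i) -> rename r P = P.
Proof.
  induction P; intros d r Hc H; simpl in *.
  - auto.
  - rewrite H; auto.
  - f_equal. apply (IHP (S d)); auto. intros [|i] Hi; simpl; auto. rewrite H; auto; lia.
  - f_equal. eauto.
  - destruct Hc. f_equal; eauto.
Qed.

Lemma closed_rename : forall P d d' r, closed_at d P -> (forall i, i < d -> r i < d') -> closed_at d' (rename r P).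
Proof.
  induction P; intros d d' r Hc H; simpl in *; auto.
  - apply (IHP (S d)); auto. intros [|i] Hi; simpl; try lia. specialize (H i). lia.
  - eauto.
  - split; [eapply IHP1|eapply IHP2]; eauto; tauto.
Qed.

Lemma closed_mono : forall P d d', closed_at d P -> d <= d' -> closed_at d' P.
Proof.
  induction P; intros d d' Hc H; simpl in *; auto; try lia.
  - apply (IHP (S d)); auto; lia.
  - eauto.
  - split; [eapply IHP1|eapply IHP2]; eauto; tauto.
Qed.

Lemma lift_closed : forall P k, closed_at 0 P -> lift k P = P.
Proof. intros. unfold lift. eapply rename_id_closed; eauto. intros; lia. Qed.

Lemma subst_closed : forall P d k U, closed_at d P -> d <= k -> subst_rec k U P = P.
Proof.
  induction P; intros d k U Hc H; simpl in *.
  - auto.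
  - destruct (Nat.eq_dec n k); [lia|]. destruct (Nat.ltb_spec k n); [lia|auto].
  - f_equal. apply (IHP (S d)); auto; lia.
  - f_equal. eauto.
  - destruct Hc; f_equal; eauto.
Qed.

Lemma subst_rename : forall X U r r' k k', closed_at 0 U ->
  r k = k' -> (forall i, i < k -> r i < k') -> (forall i, k < i -> k' < r i) ->
  (forall i, i < k -> r' i = r i) -> (forall i, k < i -> r' (pred i) = pred (r i)) ->
  subst_rec k' U (rename r X) = rename r' (subst_rec k U X).
Proof.
  induction X; intros U r r' k k' HU H1 H2 H3 H4 H5; simpl; auto.
  - destruct (Nat.eq_dec n k) as [e|ne].
    + subst. destruct (Nat.eq_dec (r k) (r k)); [|congruence].
      rewrite !lift_closed; auto. symmetry. eapply rename_id_closed; eauto. intros; lia.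
    + destruct (Nat.ltb_spec k n).
      * specialize (H3 n H). destruct (Nat.eq_dec (r n) k'); [lia|].
        destruct (Nat.ltb_spec k' (r n)); [|lia]. simpl. rewrite H5; auto.
      * assert (n < k) by lia. specialize (H2 n H0).
        destruct (Nat.eq_dec (r n) k'); [lia|].
        destruct (Nat.ltb_spec k' (r n)); [lia|]. simpl. rewrite H4; auto.
  - f_equal. apply IHX; auto.
    + simpl. congruence.
    + intros [|i] Hi; simpl; [lia|]. specialize (H2 i). lia.
    + intros [|i] Hi; simpl; [lia|]. specialize (H3 i). lia.
    + intros [|i] Hi; simpl; auto. rewrite H4; auto; lia.
    + intros [|i] Hi; simpl; [lia|]. destruct i as [|j]; [lia|]. simpl.
      specialize (H5 (S j)). simpl in H5. rewrite H5 by lia. specialize (H3 (S j)). 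
      assert (k' < r (S j)) by (apply H3; lia). destruct (r (S j)); simpl; lia.
  - f_equal. eapply IHX; eauto.
  - f_equal; [eapply IHX1|eapply IHX2]; eauto.
Qed.

Lemma subst_lift1 : forall X U k, closed_at 0 U ->
  subst_rec (S k) U (lift 1 X) = lift 1 (subst_rec k U X).
Proof.
  intros. unfold lift. apply subst_rename; auto; intros; try lia.
  all: destruct i; simpl; lia.
Qed.

Lemma subst_lamren : forall X U k, closed_at 0 U ->
  subst_rec (S (S (S k))) U (rename lam_ren X) = rename lam_ren (subst_rec (S k) U X).
Proof.
  intros. apply subst_rename; auto; intros.
  - simpl. lia.
  - destruct i; simpl; lia.
  - destruct i; simpl; lia.
  - destruct i as [|[|j]]; simpl; lia.
Qed.

Lemma subst_lamren0 : forall X U, closed_at 0 U ->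
  subst_rec 1 U (rename lam_ren X) = rename (fun i => i + 2) (subst_rec 0 U X).
Proof.
  intros. apply subst_rename; auto; intros; try lia.
  - destruct i; simpl; lia.
  - destruct i as [|[|j]]; simpl; lia.
Qed.

Lemma closed_tr_num : forall n, closed_at 0 (tr_num n).
Proof. induction n; simpl; auto. eapply closed_mono; eauto. Qed.

Lemma closed_Restart : closed_at 0 Restart.
Proof. simpl. repeat split; lia. Qed.

Lemma closed_tr_term : forall t d, wf_at d t -> closed_at d (tr_term t).
Proof.
  induction t; intros d H; simpl in *.
  - eapply closed_mono; [apply closed_tr_num|lia].
  - auto.
  - repeat split; try lia.
    eapply closed_rename; [apply IHt; eauto|]. intros [|i] Hi; simpl; lia.
  - destruct H. repeat split; try lia.
    + eapply closed_rename; [apply IHt1; eauto|]. intros; lia.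
    + eapply closed_rename; [apply IHt2; eauto|]. intros; lia.
Qed.

Lemma closed_tr_stack : forall pi, Forall wf_term pi -> closed_at 0 (tr_stack pi).
Proof.
  induction pi; intros H; simpl; [lia|]. inversion H; subst.
  split; auto. apply closed_tr_term; auto.
Qed.

Lemma tr_open : forall t k u, wf_at (S k) t -> closed_at 0 (tr_term u) ->
  tr_term (open_rec k u t) = subst_rec k (tr_term u) (tr_term t).
Proof.
  induction t; intros k u Hw Hu; simpl in *.
  - symmetry. eapply subst_closed; [apply closed_tr_num|lia].
  - destruct (Nat.eq_dec n k).
    + subst. simpl. destruct (Nat.eq_dec k k); [|congruence]. rewrite lift_closed; auto.
    + simpl. destruct (Nat.eq_dec n k); [congruence|]. destruct (Nat.ltb_spec k n); [lia|auto].
  - rewrite subst_lamren by auto. rewrite <- IHt by auto. reflexivity.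
  - destruct Hw. rewrite !subst_lift1 by auto. rewrite <- IHt1, <- IHt2 by auto. reflexivity.
Qed.

Lemma wf_mono : forall t d d', wf_at d t -> d <= d' -> wf_at d' t.
Proof.
  induction t; intros d d' H Hd; simpl in *; auto; try lia.
  - apply (IHt (S d)); auto; lia.
  - destruct H; split; eauto.
Qed.

Lemma wf_open : forall t k u, wf_at (S k) t -> wf_at 0 u -> wf_at k (open_rec k u t).
Proof.
  induction t; intros k u Hw Hu; simpl in *; auto.
  - destruct (Nat.eq_dec n k); simpl; auto.
    + eapply wf_mono; eauto; lia.
    + lia.
  - destruct Hw; split; auto.
Qed.

Fixpoint flatten (P : proc) : list proc :=
  match P with
  | PNil => []
  | PPar P1 P2 => flatten P1 ++ flatten P2
  | _ => [P]
  end.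

Inductive pick {A} (x : A) : list A -> list A -> Prop :=
  | pick_here : forall L, pick x (x :: L) L
  | pick_there : forall y L L', pick x L L' -> pick x (y :: L) (y :: L').

Lemma pick_appl {A} : forall (x : A) L1 L1' L2, pick x L1 L1' -> pick x (L1 ++ L2) (L1' ++ L2).
Proof. induction 1; simpl; constructor; auto. Qed.

Lemma pick_appr {A} : forall (x : A) L1 L2 L2', pick x L2 L2' -> pick x (L1 ++ L2) (L1 ++ L2').
Proof. induction L1; simpl; intros; auto. constructor; auto. Qed.

Lemma pick_app_inv {A} : forall (x : A) L1 L2 L, pick x (L1 ++ L2) L ->
  (exists L1', pick x L1 L1' /\ L = L1' ++ L2) \/ (exists L2', pick x L2 L2' /\ L = L1 ++ L2').
Proof.
  induction L1; simpl; intros L2 L H.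
  - right. eauto.
  - inversion H; subst.
    + left. exists L1. split; auto. constructor.
    + match goal with Hh : pick x (L1 ++ L2) _ |- _ => destruct (IHL1 _ _ Hh) as [[L1' [? ?]]|[L2' [? ?]]] end; subst.
      * left. exists (a :: L1'). split; auto. constructor; auto.
      * right. eauto.
Qed.

Lemma pick_perm {A} : forall (x : A) L L', pick x L L' -> Permutation L (x :: L').
Proof.
  induction 1. auto. eapply perm_trans; [apply perm_skip; eauto|]. apply perm_swap.
Qed.

Lemma in_pick {A} : forall (x : A) L, In x L -> exists L', pick x L L'.
Proof.
  induction L; simpl; intros H; [tauto|]. destruct H as [->|H].
  - eexists; constructor.
  - destruct (IHL H) as [L' ?]. exists (a :: L'). constructor; auto.
Qed.

Lemma perm_pick {A} : forall (L1 L2 : list A), Permutation L1 L2 -> forall x L1', pick x L1 L1' ->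
  exists L2', pick x L2 L2' /\ Permutation L1' L2'.
Proof.
  intros L1 L2 HP x L1' Hp. pose proof (pick_perm _ _ _ Hp) as H1.
  assert (In x L2) as Hin. { eapply Permutation_in; [exact HP|]. eapply Permutation_in; [apply Permutation_sym; exact H1|]. left; auto. }
  destruct (in_pick _ _ Hin) as [L2' Hp2]. exists L2'. split; auto.
  apply Permutation_cons_inv with x. eapply perm_trans; [apply Permutation_sym; exact H1|].
  eapply perm_trans; [exact HP|]. apply pick_perm; auto.
Qed.

Ltac pk := repeat match goal with
  | H : pick _ [] _ |- _ => inversion H
  | H : pick _ (_ :: _) _ |- _ => inversion H; subst; clear H
  end.

Lemma lts_pick : forall X l X', lts X l X' ->
  match l with
  | LOut a P => exists L, pick (POut a P) (flatten X) L /\ Permutation (flatten X') L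
  | LIn a M => exists Q L, pick (PIn a Q) (flatten X) L /\ Permutation (flatten X') (flatten (subst Q M) ++ L)
  | LTau => exists a M Q L1 L2, pick (POut a M) (flatten X) L1 /\ pick (PIn a Q) L1 L2 /\
             Permutation (flatten X') (flatten (subst Q M) ++ L2)
  end.
Proof.
  induction 1; simpl.
  - exists []. split; [constructor|auto].
  - exists Q, []. split; [constructor|]. rewrite app_nil_r. auto.
  - destruct l.
    + destruct IHlts as [Q0 [L [H1 H2]]]. exists Q0, (L ++ flatten Q). split.
      * apply pick_appl; auto.
      * rewrite app_assoc. apply Permutation_app_tail; auto.
    + destruct IHlts as [L [H1 H2]]. exists (L ++ flatten Q). split.
      * apply pick_appl; auto.
      * apply Permutation_app_tail; auto.
    + destruct IHlts as (a & M & Q0 & L1 & L2 & H1 & H2 & H3).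
      exists a, M, Q0, (L1 ++ flatten Q), (L2 ++ flatten Q). split; [|split].
      * apply pick_appl; auto.
      * apply pick_appl; auto.
      * rewrite app_assoc. apply Permutation_app_tail; auto.
  - destruct l.
    + destruct IHlts as [Q0 [L [H1 H2]]]. exists Q0, (flatten P ++ L). split.
      * apply pick_appr; auto.
      * eapply perm_trans; [apply Permutation_app_head; eauto|].
        rewrite !app_assoc. apply Permutation_app_tail. apply Permutation_app_comm.
    + destruct IHlts as [L [H1 H2]]. exists (flatten P ++ L). split.
      * apply pick_appr; auto.
      * apply Permutation_app_head; auto.
    + destruct IHlts as (a & M & Q0 & L1 & L2 & H1 & H2 & H3).
      exists a, M, Q0, (flatten P ++ L1), (flatten P ++ L2). split; [|split].
      * apply pick_appr; auto.
      * apply pick_appr; auto.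
      * eapply perm_trans; [apply Permutation_app_head; eauto|].
        rewrite !app_assoc. apply Permutation_app_tail. apply Permutation_app_comm.
  - destruct IHlts1 as [L1 [H1 H2]]. destruct IHlts2 as [Q0 [L2 [H3 H4]]].
    exists a, R, Q0, (L1 ++ flatten Q), (L1 ++ L2). split; [|split].
    + apply pick_appl; auto.
    + apply pick_appr; auto.
    + eapply perm_trans; [apply Permutation_app; eauto|].
      rewrite !app_assoc. apply Permutation_app_tail. apply Permutation_app_comm.
  - destruct IHlts1 as [Q0 [L1 [H1 H2]]]. destruct IHlts2 as [L2 [H3 H4]].
    exists a, R, Q0, (flatten P ++ L2), (L1 ++ L2). split; [|split].
    + apply pick_appr; auto.
    + apply pick_appl; auto.
    + eapply perm_trans; [apply Permutation_app; eauto|].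
      rewrite app_assoc. auto.
Qed.

Lemma pick_out_lts : forall X a P L, pick (POut a P) (flatten X) L ->
  exists X', lts X (LOut a P) X' /\ Permutation (flatten X') L.
Proof.
  induction X; simpl; intros a0 P0 L H; try (inversion H; fail).
  1-3: pk. all: try (exists PNil; split; [constructor|auto]; fail).
  - apply pick_app_inv in H. destruct H as [[L1 [H1 ->]]|[L2 [H2 ->]]].
    + destruct (IHX1 _ _ _ H1) as [X' [? ?]]. exists (PPar X' X2). split; [constructor; auto|].
      simpl. apply Permutation_app_tail; auto.
    + destruct (IHX2 _ _ _ H2) as [X' [? ?]]. exists (PPar X1 X'). split; [constructor; auto|].
      simpl. apply Permutation_app_head; auto.
Qed.

Lemma pick_in_lts : forall X a Q L M, pick (PIn a Q) (flatten X) L ->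
  exists X', lts X (LIn a M) X' /\ Permutation (flatten X') (flatten (subst Q M) ++ L).
Proof.
  induction X; simpl; intros a0 Q0 L M H; try (inversion H; fail).
  1-3: pk. all: try (eexists; split; [constructor|]; rewrite app_nil_r; apply Permutation_refl; fail).
  - apply pick_app_inv in H. destruct H as [[L1 [H1 ->]]|[L2 [H2 ->]]].
    + destruct (IHX1 _ _ _ M H1) as [X' [? ?]]. exists (PPar X' X2). split; [constructor; auto|].
      simpl. rewrite app_assoc. apply Permutation_app_tail; auto.
    + destruct (IHX2 _ _ _ M H2) as [X' [? ?]]. exists (PPar X1 X'). split; [constructor; auto|].
      simpl. eapply perm_trans; [apply Permutation_app_head; eauto|].
      rewrite !app_assoc. apply Permutation_app_tail. apply Permutation_app_comm.
Qed.

Lemma pick_tau_lts : forall X a M Q L1 L2, pick (POut a M) (flatten X) L1 -> pick (PIn a Q) L1 L2 ->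
  exists X', lts X LTau X' /\ Permutation (flatten X') (flatten (subst Q M) ++ L2).
Proof.
  induction X; simpl; intros a0 M Q0 L1 L2 H H'; try (inversion H; fail).
  1-3: pk.
  - apply pick_app_inv in H. destruct H as [[L1' [H1 ->]]|[L2' [H2 ->]]].
    + apply pick_app_inv in H'. destruct H' as [[L1'' [H3 ->]]|[L2'' [H4 ->]]].
      * destruct (IHX1 _ _ _ _ _ H1 H3) as [X' [? ?]]. exists (PPar X' X2). split; [constructor; auto|].
        simpl. rewrite app_assoc. apply Permutation_app_tail; auto.
      * destruct (pick_out_lts _ _ _ _ H1) as [X1' [? ?]].
        destruct (pick_in_lts _ _ _ _ M H4) as [X2' [? ?]].
        exists (PPar X1' X2'). split; [econstructor; eauto|]. simpl.
        eapply perm_trans; [apply Permutation_app; eauto|].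
        rewrite !app_assoc. apply Permutation_app_tail. apply Permutation_app_comm.
    + apply pick_app_inv in H'. destruct H' as [[L1'' [H3 ->]]|[L2'' [H4 ->]]].
      * destruct (pick_out_lts _ _ _ _ H2) as [X2' [? ?]].
        destruct (pick_in_lts _ _ _ _ M H3) as [X1' [? ?]].
        exists (PPar X1' X2'). split; [eapply lts_commR; eauto|]. simpl.
        eapply perm_trans; [apply Permutation_app; eauto|].
        rewrite app_assoc. auto.
      * destruct (IHX2 _ _ _ _ _ H2 H4) as [X' [? ?]]. exists (PPar X1 X'). split; [constructor; auto|].
        simpl. eapply perm_trans; [apply Permutation_app_head; eauto|].
        rewrite !app_assoc. apply Permutation_app_tail. apply Permutation_app_comm.
Qed.

Definition Hfree (R : proc) : Prop := forall a, In a (fn R) -> ~ In a Hhid.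

Lemma fn_rename : forall P r, fn (rename r P) = fn P.
Proof. induction P; intros; simpl; auto; try (rewrite IHP; auto). rewrite IHP1, IHP2; auto. Qed.

Lemma fn_subst : forall Q k M b, In b (fn (subst_rec k M Q)) -> In b (fn Q) \/ In b (fn M).
Proof.
  induction Q; simpl; intros k M b H; auto.
  - destruct (Nat.eq_dec n k). unfold lift in H; rewrite fn_rename in H; auto.
    destruct (Nat.ltb k n); simpl in H; tauto.
  - destruct H; auto. destruct (IHQ _ _ _ H); auto.
  - destruct H; auto. destruct (IHQ _ _ _ H); auto.
  - apply in_app_or in H. destruct H as [H|H]; [destruct (IHQ1 _ _ _ H)|destruct (IHQ2 _ _ _ H)];
    auto using in_or_app.
Qed.

Lemma lts_fn : forall P l P', lts P l P' ->
  (forall b, In b (fn P') -> In b (fn P) \/ (exists a M, l = LIn a M /\ In b (fn M))) /\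
  (match l with LIn a _ => In a (fn P) | LOut a M => In a (fn P) /\ (forall b, In b (fn M) -> In b (fn P)) | LTau => True end).
Proof.
  induction 1; simpl.
  - split; [tauto|]. split; auto.
  - split; auto. intros b Hb. destruct (fn_subst _ _ _ _ Hb); eauto 6.
  - destruct IHlts as [H1 H2]. split.
    + intros b Hb. apply in_app_or in Hb. destruct Hb as [Hb|Hb]; auto using in_or_app.
      destruct (H1 _ Hb); auto using in_or_app.
    + destruct l; auto using in_or_app. destruct H2; split; auto using in_or_app.
  - destruct IHlts as [H1 H2]. split.
    + intros b Hb. apply in_app_or in Hb. destruct Hb as [Hb|Hb]; auto using in_or_app.
      destruct (H1 _ Hb); auto using in_or_app.
    + destruct l; auto using in_or_app. destruct H2; split; auto using in_or_app.
  - destruct IHlts1 as [H1 [H2 H3]]. destruct IHlts2 as [H4 H5]. split; auto.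
    intros b Hb. left. apply in_app_or in Hb. destruct Hb as [Hb|Hb].
    + destruct (H1 _ Hb) as [|(? & ? & ? & ?)]; [auto using in_or_app|discriminate].
    + destruct (H4 _ Hb) as [|(? & ? & E & ?)]; [auto using in_or_app|]. inversion E; subst.
      auto using in_or_app.
  - destruct IHlts1 as [H1 H2]. destruct IHlts2 as [H4 [H5 H6]]. split; auto.
    intros b Hb. left. apply in_app_or in Hb. destruct Hb as [Hb|Hb].
    + destruct (H1 _ Hb) as [|(? & ? & E & ?)]; [auto using in_or_app|]. inversion E; subst.
      auto using in_or_app.
    + destruct (H4 _ Hb) as [|(? & ? & ? & ?)]; [auto using in_or_app|discriminate].
Qed.

Lemma Hfree_step : forall R l R', lts R l R' -> Hfree R ->
  (forall a M, l = LIn a M -> Hfree M) -> Hfree R'.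
Proof.
  intros R l R' H HR HM b Hb. destruct (proj1 (lts_fn _ _ _ H) _ Hb) as [|(a & M & E & ?)]; auto.
  eapply HM; eauto.
Qed.

Lemma lts_in_any : forall P a M P', lts P (LIn a M) P' -> forall M', exists P'', lts P (LIn a M') P''.
Proof.
  intros P a M P' H. remember (LIn a M) as l. revert a M Heql.
  induction H; intros; try discriminate.
  - inversion Heql; subst. eexists; constructor.
  - subst. destruct (IHlts _ _ eq_refl M') as [? ?]. eexists; apply lts_parL; eauto.
  - subst. destruct (IHlts _ _ eq_refl M') as [? ?]. eexists; apply lts_parR; eauto.
Qed.

Definition relevant (l : label) : Prop := l = LTau \/ exists c M, l = LIn c M /\ ~ In c Hhid.

Section W.
Variable A : Type.
Variable step : A -> label -> A -> Prop.

Inductive star : A -> A -> Prop :=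
  | star_refl : forall a, star a a
  | star_step : forall a b c, step a LTau b -> star b c -> star a c.

Definition wstep (a : A) (l : label) (a' : A) : Prop :=
  match l with
  | LTau => star a a'
  | _ => exists a1 a2, star a a1 /\ step a1 l a2 /\ star a2 a'
  end.

Definition WB (R : A -> A -> Prop) : Prop :=
  (forall a b, R a b -> R b a) /\
  (forall a b l a', R a b -> step a l a' -> relevant l -> exists b', wstep b l b' /\ R a' b').

Lemma star_trans : forall a b c, star a b -> star b c -> star a c.
Proof. induction 1; intros; auto. econstructor; eauto. Qed.

Lemma wstep_star_l : forall a a1 l a', star a a1 -> wstep a1 l a' -> wstep a l a'.
Proof.
  intros. destruct l; simpl in *; try (destruct H0 as (x & y & ? & ? & ?); exists x, y; split; [eapply star_trans; eauto|auto]).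
  eapply star_trans; eauto.
Qed.

Lemma wstep_star_r : forall a a1 l a', wstep a l a1 -> star a1 a' -> wstep a l a'.
Proof.
  intros. destruct l; simpl in *; try (destruct H as (x & y & ? & ? & ?); exists x, y; split; [auto|split; [auto|eapply star_trans; eauto]]).
  eapply star_trans; eauto.
Qed.

Lemma step_wstep : forall a l a', step a l a' -> wstep a l a'.
Proof.
  intros. destruct l; simpl; try (exists a, a'; split; [constructor|split; [auto|constructor]]).
  econstructor; eauto. constructor.
Qed.

Lemma WB_star : forall R, WB R -> forall a b a', R a b -> star a a' -> exists b', star b b' /\ R a' b'.
Proof.
  intros R HW a b a' HR Hs. revert b HR. induction Hs; intros.
  - exists b; split; auto; constructor.
  - destruct (proj2 HW _ _ _ _ HR H) as [b1 [Hb1 HR1]]; [left; auto|].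
    destruct (IHHs _ HR1) as [b2 [? ?]]. exists b2; split; auto. eapply star_trans; eauto.
Qed.

Lemma WB_wstep : forall R, WB R -> forall a b l a', R a b -> wstep a l a' -> relevant l ->
  exists b', wstep b l b' /\ R a' b'.
Proof.
  intros R HW a b l a' HR Hw Hl. destruct l.
  - destruct Hw as (a1 & a2 & H1 & H2 & H3).
    destruct (WB_star _ HW _ _ _ HR H1) as [b1 [Hb1 R1]].
    destruct (proj2 HW _ _ _ _ R1 H2 Hl) as [b2 [Hb2 R2]].
    destruct (WB_star _ HW _ _ _ R2 H3) as [b3 [Hb3 R3]].
    exists b3. split; auto. eapply wstep_star_r; [|eauto]. eapply wstep_star_l; eauto.
  - destruct Hl as [E|(? & ? & E & _)]; discriminate.
  - simpl in Hw. eapply WB_star; eauto.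
Qed.
End W.

Arguments star {A}.
Arguments wstep {A}.
Arguments WB {A}.

Lemma F_star : forall {A B : Type} (stA : A -> label -> A -> Prop) (stB : B -> label -> B -> Prop) (G : A -> B -> Prop),
  (forall a b l a', G a b -> stA a l a' -> relevant l -> exists b', wstep stB b l b' /\ G a' b') ->
  forall a b a', G a b -> star stA a a' -> exists b', star stB b b' /\ G a' b'.
Proof.
  intros A0 B0 stA stB G HG a b a' HF Hs. revert b HF. induction Hs; intros.
  - exists b; split; auto; constructor.
  - destruct (HG _ _ _ _ HF H) as [b1 [Hb1 HR1]]; [left; auto|].
    destruct (IHHs _ HR1) as [b2 [? ?]]. exists b2; split; auto. eapply star_trans; eauto.
Qed.

Lemma F_wstep : forall {A B : Type} (stA : A -> label -> A -> Prop) (stB : B -> label -> B -> Prop) (G : A -> B -> Prop),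
  (forall a b l a', G a b -> stA a l a' -> relevant l -> exists b', wstep stB b l b' /\ G a' b') ->
  forall a b l a', G a b -> wstep stA a l a' -> relevant l -> exists b', wstep stB b l b' /\ G a' b'.
Proof.
  intros A0 B0 stA stB G HG a b l a' HR Hw Hl. destruct l.
  - destruct Hw as (a1 & a2 & H1 & H2 & H3).
    destruct (F_star _ _ _ HG _ _ _ HR H1) as [b1 [Hb1 R1]].
    destruct (HG _ _ _ _ R1 H2 Hl) as [b2 [Hb2 R2]].
    destruct (F_star _ _ _ HG _ _ _ R2 H3) as [b3 [Hb3 R3]].
    exists b3. split; auto. eapply wstep_star_r; [|eauto]. eapply wstep_star_l; eauto.
  - destruct Hl as [E|(? & ? & E & _)]; discriminate.
  - simpl in Hw. eapply F_star; eauto.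
Qed.


Section Transfer.
Variables A B : Type.
Variable stepA : A -> label -> A -> Prop.
Variable stepB : B -> label -> B -> Prop.
Variable F : A -> B -> Prop.
Hypothesis F1 : forall a b l a', F a b -> stepA a l a' -> relevant l -> exists b', wstep stepB b l b' /\ F a' b'.
Hypothesis F2 : forall a b l b', F a b -> stepB b l b' -> relevant l -> exists a', wstep stepA a l a' /\ F a' b'.

Lemma transfer : forall RB, WB stepB RB ->
  WB stepA (fun a1 a2 => exists b1 b2, F a1 b1 /\ F a2 b2 /\ RB b1 b2).
Proof.
  intros RB HW. split.
  - intros a1 a2 (b1 & b2 & H1 & H2 & H3). exists b2, b1. split; auto. split; auto. apply (proj1 HW); auto.
  - intros a1 a2 l a1' (b1 & b2 & H1 & H2 & H3) Hs Hl.
    destruct (F1 _ _ _ _ H1 Hs Hl) as [b1' [Hw1 HF1]].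
    destruct (WB_wstep _ _ _ HW _ _ _ _ H3 Hw1 Hl) as [b2' [Hw2 HR2]].
    assert (HH := F_wstep (A:=B) (B:=A) stepB stepA (fun b a => F a b)).
    destruct (HH ltac:(intros ? ? ? ? Hf Hst Hr; exact (F2 _ _ _ _ Hf Hst Hr)) b2 a2 l b2' H2 Hw2 Hl) as [a2' [? ?]].
    exists a2'. split; auto. exists b1', b2'. auto.
Qed.
End Transfer.

Lemma taus_star : forall P Q, taus P Q <-> star lts P Q.
Proof.
  split; induction 1; econstructor; eauto.
Qed.

Definition CoreB (S : proc -> proc -> Prop) : Prop :=
  WB lts S /\ (forall X Y, S X Y -> forall a M X', lts X (LOut a M) X' -> In a Hhid).

Inductive ctx : proc -> proc -> proc -> proc -> Prop :=
  | ctx0 : forall X Y, ctx X Y X Y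
  | ctxS : forall P Q X Y R, ctx P Q X Y -> Hfree R -> ctx (PPar P R) (PPar Q R) X Y.

Section G.
Variable S : proc -> proc -> Prop.
Hypothesis HS : CoreB S.

Definition RelG P Q := exists X Y, S X Y /\ ctx P Q X Y.

Lemma star_parL : forall P P' R, star lts P P' -> star lts (PPar P R) (PPar P' R).
Proof. induction 1; econstructor; eauto. constructor; auto. Qed.

Lemma wstep_parL : forall P l P' R, wstep lts P l P' -> wstep lts (PPar P R) l (PPar P' R).
Proof.
  intros. destruct l; simpl in *; try (destruct H as (x & y & ? & ? & ?); exists (PPar x R), (PPar y R);
    split; [apply star_parL; auto|split; [constructor; auto|apply star_parL; auto]]).
  apply star_parL; auto.
Qed.

Lemma lts_par_inv : forall P R l P', lts (PPar P R) l P' ->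
  (exists P1, lts P l P1 /\ P' = PPar P1 R) \/ (exists R1, lts R l R1 /\ P' = PPar P R1) \/
  (exists a M P1 R1, l = LTau /\ lts P (LOut a M) P1 /\ lts R (LIn a M) R1 /\ P' = PPar P1 R1) \/
  (exists a M P1 R1, l = LTau /\ lts P (LIn a M) P1 /\ lts R (LOut a M) R1 /\ P' = PPar P1 R1).
Proof. intros. inversion H; subst. left; eauto. right; left; eauto. right; right; left; eauto 10. right; right; right; eauto 10. Qed.

Lemma main_G : forall P Q X Y, ctx P Q X Y -> S X Y -> forall l P', lts P l P' ->
  (l = LTau \/ (exists a M, l = LIn a M /\ ~ In a Hhid /\ Hfree M) \/ (exists a M, l = LOut a M /\ ~ In a Hhid)) ->
  exists Q', wstep lts Q l Q' /\ RelG P' Q' /\ (forall a M, l = LOut a M -> Hfree M).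
Proof.
  induction 1; intros HSXY l P' Hl Hc.
  - destruct Hc as [->|[(a & M & -> & Ha & HM)|(a & M & -> & Ha)]].
    + destruct (proj2 (proj1 HS) _ _ _ _ HSXY Hl) as [Y' [? ?]]; [left; auto|].
      exists Y'. split; auto. split; [exists P', Y'; split; auto; constructor|]. intros; discriminate.
    + destruct (proj2 (proj1 HS) _ _ _ _ HSXY Hl) as [Y' [? ?]]; [right; eauto|].
      exists Y'. split; auto. split; [exists P', Y'; split; auto; constructor|]. intros; discriminate.
    + exfalso. apply Ha. eapply (proj2 HS); eauto.
  - apply lts_par_inv in Hl.
    destruct Hl as [(P1 & Hst & ->)|[(R1 & Hst & ->)|[(a & M & P1 & R1 & -> & Hs1 & Hs2 & ->)|(a & M & P1 & R1 & -> & Hs1 & Hs2 & ->)]]].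
    + destruct (IHctx HSXY _ _ Hst Hc) as (Q' & Hw & (X' & Y' & HS' & Hct) & HM).
      exists (PPar Q' R). split; [apply wstep_parL; auto|]. split; auto.
      exists X', Y'. split; auto. constructor; auto.
    + exists (PPar Q R1). split; [apply step_wstep; constructor; auto|]. split.
      * exists X, Y. split; auto. constructor; auto. eapply Hfree_step; eauto.
        intros a M E; subst. destruct Hc as [E|[(a' & M' & E & ? & ?)|(? & ? & E & ?)]]; try discriminate.
        inversion E; subst; auto.
      * intros a M E; subst. intros b Hb. apply H0. apply (proj2 (lts_fn _ _ _ Hst)); auto.
    +
      assert (Ha : ~ In a Hhid) by (apply H0; apply (proj2 (lts_fn _ _ _ Hs2))).
      destruct (IHctx HSXY _ _ Hs1) as (Q' & Hw & (X' & Y' & HS' & Hct) & HM); [right; right; eauto|].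
      specialize (HM _ _ eq_refl).
      destruct Hw as (q1 & q2 & Hq1 & Hq2 & Hq3).
      exists (PPar Q' R1). split.
      * eapply star_trans; [apply star_parL; eauto|]. econstructor; [eapply lts_commL; eauto|].
        apply star_parL; auto.
      * split; [|intros; discriminate]. exists X', Y'. split; auto. constructor; auto.
        eapply Hfree_step; eauto. intros ? ? E; inversion E; subst; auto.
    +
      pose proof (proj2 (lts_fn _ _ _ Hs2)) as [Ha HRM].
      assert (HM : Hfree M) by (intros b Hb; apply H0; auto).
      destruct (IHctx HSXY _ _ Hs1) as (Q' & Hw & (X' & Y' & HS' & Hct) & _); [right; left; exists a, M; split; auto|].
      destruct Hw as (q1 & q2 & Hq1 & Hq2 & Hq3).
      exists (PPar Q' R1). split.
      * eapply star_trans; [apply star_parL; eauto|]. econstructor; [eapply lts_commR; eauto|].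
        apply star_parL; auto.
      * split; [|intros; discriminate]. exists X', Y'. split; auto. constructor; auto.
        eapply Hfree_step; eauto. intros; discriminate.
Qed.

Lemma ctx_sym : forall P Q X Y, ctx P Q X Y -> ctx Q P Y X.
Proof. induction 1; constructor; auto. Qed.

Lemma RelG_bb : barbed_bisimulation Hhid RelG.
Proof.
  split; [|split; [|split]].
  - intros P Q (X & Y & H1 & H2). exists Y, X. split; [apply (proj1 (proj1 HS)); auto|apply ctx_sym; auto].
  - intros mu Hb. destruct H as (X & Y & HXY & Hct). destruct mu as [a|a]; simpl in Hb; destruct Hb as [Ha (Q0 & R0 & Hl)].
    + destruct (lts_in_any _ _ _ _ Hl PNil) as [P'' Hl'].
      destruct (main_G _ _ _ _ Hct HXY _ _ Hl') as (Q' & Hw & _ & _).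
      { right; left. exists a, PNil. split; auto. split; auto. intros b Hb; inversion Hb. }
      destruct Hw as (q1 & q2 & Hq1 & Hq2 & Hq3). exists q1. split; [apply taus_star; auto|].
      simpl. split; eauto.
    + destruct (main_G _ _ _ _ Hct HXY _ _ Hl) as (Q' & Hw & _ & _).
      { right; right. eauto. }
      destruct Hw as (q1 & q2 & Hq1 & Hq2 & Hq3). exists q1. split; [apply taus_star; auto|].
      simpl. split; eauto.
  - intros R HR. destruct H as (X & Y & HXY & Hct). exists X, Y. split; auto. constructor; auto.
  - intros P' Hl. destruct H as (X & Y & HXY & Hct).
    destruct (main_G _ _ _ _ Hct HXY _ _ Hl) as (Q' & Hw & HR & _); [left; auto|].
    exists Q'. split; auto. apply taus_star; auto.
Qed.
End G.

Lemma CoreB_barbed : forall S X Y, CoreB S -> S X Y -> barbed_equiv Hhid X Y.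
Proof.
  intros S X Y HS HXY. exists (RelG S). split; [apply RelG_bb; auto|]. exists X, Y. split; auto. constructor.
Qed.

Notation Ktl n := [POut Nk (tr_num n); Rec; POut Nrec Rec] (only parsing).
Notation LH t := (PIn Nhd (PIn Nb (rename lam_ren (tr_term t)))) (only parsing).
Notation KB := (PIn Nk (PPar (POut Nhd (PVar 0)) (PPar (POut Nk (PIn Nsuc (PVar 1))) (PPar (POut Nc tr_nil) (POut Nb PNil))))) (only parsing).
Notation RecB := (PIn Nrec (PPar (PVar 0) (PPar (POut Nrec (PVar 0)) Cont))) (only parsing).
Notation CH := (PIn Nhd (PIn Nb (Choice (PVar 1)))) (only parsing).
Notation EN T := (PIn Nenter (PIn Nc (PPar T (POut Nc tr_nil)))) (only parsing).
Notation B0 := (PIn Nskip (POut Ninit PNil)) (only parsing).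
Notation Sel := (PIn Nch (PIn Nch (PVar 1))) (only parsing).
Notation DN := (PIn Ndone PNil) (only parsing).

Inductive ast : Type :=
  | SEv (t : term) (pi : stack) (n : nat)
  | SLam1 (t : term) (pi : stack) (n : nat)
  | SLamR (t : term) (n : nat)
  | SLamK (t : term) (n : nat)
  | SLamH (t : term) (n : nat)
  | SLamB (t : term) (n : nat)
  | SLamS (t s : term) (pi : stack) (n : nat)
  | SInit (pi : stack) (n : nat)
  | SRec (pi : stack) (n : nat)
  | SCo (pi : stack) (n : nat)
  | SCo1 (pi : stack) (n : nat)
  | SDone1 (n : nat)
  | SDone2 (n : nat)
  | SCoB (t : term) (pi : stack) (n : nat)
  | SCh (t : term) (pi : stack) (n : nat)
  | SChA (t : term) (pi : stack) (n : nat)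
  | SChB (t : term) (pi : stack) (n : nat)
  | SEnter (t : term) (pi : stack) (n : nat)
  | SEnter2 (t : term) (pi : stack) (n : nat)
  | SSkip (pi : stack) (n : nat).

Definition repr (a : ast) : list proc :=
  match a with
  | SEv t pi n => tr_term t :: POut Nc (tr_stack pi) :: Ktl n
  | SLam1 t pi n => flatten (tr_stack pi) ++ POut Nb Restart :: LH t :: Ktl n
  | SLamR t n => Restart :: LH t :: Ktl n
  | SLamK t n => KB :: LH t :: Ktl n
  | SLamH t n => [POut Nhd (tr_num n); POut Nk (tr_num (S n)); POut Nc tr_nil; POut Nb PNil; LH t; Rec; POut Nrec Rec]
  | SLamB t n => [PIn Nb (subst_rec 1 (tr_num n) (rename lam_ren (tr_term t))); POut Nb PNil;
                  POut Nk (tr_num (S n)); POut Nc tr_nil; Rec; POut Nrec Rec]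
  | SLamS t s pi n => PIn Nb (subst_rec 1 (tr_term s) (rename lam_ren (tr_term t))) :: POut Nc (tr_stack pi)
                      :: POut Nb Restart :: Ktl n
  | SInit pi n => POut Ninit PNil :: POut Nc (tr_stack pi) :: Ktl n
  | SRec pi n => [RecB; POut Nc (tr_stack pi); POut Nk (tr_num n); POut Nrec Rec]
  | SCo pi n => POut Nc (tr_stack pi) :: Cont :: Ktl n
  | SCo1 pi n => flatten (tr_stack pi) ++ POut Nb DN :: CH :: Ktl n
  | SDone1 n => DN :: CH :: Ktl n
  | SDone2 n => CH :: Ktl n
  | SCoB t pi n => PIn Nb (choice_plus (EN (tr_term t)) B0) :: POut Nc (tr_stack pi) :: POut Nb DN :: Ktl n
  | SCh t pi n => POut Nch (EN (tr_term t)) :: POut Nch B0 :: Sel :: POut Nc (tr_stack pi) :: Ktl n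
  | SChA t pi n => PIn Nch (EN (tr_term t)) :: POut Nch B0 :: POut Nc (tr_stack pi) :: Ktl n
  | SChB t pi n => PIn Nch B0 :: POut Nch (EN (tr_term t)) :: POut Nc (tr_stack pi) :: Ktl n
  | SEnter t pi n => EN (tr_term t) :: POut Nc (tr_stack pi) :: Ktl n
  | SEnter2 t pi n => PIn Nc (PPar (tr_term t) (POut Nc tr_nil)) :: POut Nc (tr_stack pi) :: Ktl n
  | SSkip pi n => B0 :: POut Nc (tr_stack pi) :: Ktl n
  end.

Definition wfa (a : ast) : Prop :=
  match a with
  | SEv t pi n => wf_term t /\ Forall wf_term pi
  | SLam1 t pi n => wf_at 1 t /\ Forall wf_term pi
  | SLamR t n | SLamK t n | SLamH t n | SLamB t n => wf_at 1 t
  | SLamS t s pi n => wf_at 1 t /\ wf_term s /\ Forall wf_term pi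
  | SInit pi n | SRec pi n | SCo pi n | SCo1 pi n | SSkip pi n => Forall wf_term pi
  | SDone1 _ | SDone2 _ => True
  | SCoB t pi n | SCh t pi n | SChA t pi n | SChB t pi n | SEnter t pi n | SEnter2 t pi n =>
      wf_term t /\ Forall wf_term pi
  end.

Inductive astep : ast -> label -> ast -> Prop :=
  | as_app : forall t1 t2 pi n, astep (SEv (TApp t1 t2) pi n) LTau (SEv t1 (t2 :: pi) n)
  | as_lam : forall t pi n, astep (SEv (TLam t) pi n) LTau (SLam1 t pi n)
  | as_suc : forall j pi n M, astep (SEv (TFree (S j)) pi n) (LIn Nsuc M) (SEv (TFree j) pi n)
  | as_z : forall pi n M, astep (SEv (TFree 0) pi n) (LIn Nz M) (SInit pi n)
  | as_l1nil : forall t n, astep (SLam1 t [] n) LTau (SLamR t n)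
  | as_l1cons : forall t s pi n, astep (SLam1 t (s :: pi) n) LTau (SLamS t s pi n)
  | as_lr : forall t n M, astep (SLamR t n) (LIn Nlam M) (SLamK t n)
  | as_lk : forall t n, astep (SLamK t n) LTau (SLamH t n)
  | as_lh : forall t n, astep (SLamH t n) LTau (SLamB t n)
  | as_lb : forall t n, astep (SLamB t n) LTau (SEv (open t (TFree n)) [] (S n))
  | as_ls : forall t s pi n, astep (SLamS t s pi n) LTau (SEv (open t s) pi n)
  | as_init : forall pi n, astep (SInit pi n) LTau (SRec pi n)
  | as_rec : forall pi n, astep (SRec pi n) LTau (SCo pi n)
  | as_co : forall pi n, astep (SCo pi n) LTau (SCo1 pi n)
  | as_c1nil : forall n, astep (SCo1 [] n) LTau (SDone1 n)
  | as_c1cons : forall t pi n, astep (SCo1 (t :: pi) n) LTau (SCoB t pi n)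
  | as_done : forall n M, astep (SDone1 n) (LIn Ndone M) (SDone2 n)
  | as_cob : forall t pi n, astep (SCoB t pi n) LTau (SCh t pi n)
  | as_chA : forall t pi n, astep (SCh t pi n) LTau (SChA t pi n)
  | as_chB : forall t pi n, astep (SCh t pi n) LTau (SChB t pi n)
  | as_chA2 : forall t pi n, astep (SChA t pi n) LTau (SEnter t pi n)
  | as_chB2 : forall t pi n, astep (SChB t pi n) LTau (SSkip pi n)
  | as_enter : forall t pi n M, astep (SEnter t pi n) (LIn Nenter M) (SEnter2 t pi n)
  | as_enter2 : forall t pi n, astep (SEnter2 t pi n) LTau (SEv t [] n)
  | as_skip : forall pi n M, astep (SSkip pi n) (LIn Nskip M) (SInit pi n).

Lemma flatten_tr_term : forall t, flatten (tr_term t) = [tr_term t].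
Proof. destruct t; simpl; auto. destruct n; auto. Qed.
Lemma flatten_tr_num : forall n, flatten (tr_num n) = [tr_num n].
Proof. destruct n; auto. Qed.

Lemma perm_cons_pick {A} : forall (x : A) l r r', pick x r r' -> Permutation l r' -> Permutation (x :: l) r.
Proof. intros. apply Permutation_sym. eapply perm_trans; [apply pick_perm; eauto|]. apply perm_skip. apply Permutation_sym; auto. Qed.

Ltac pick_solve := first [apply pick_here | apply pick_there; pick_solve].
Ltac perm_solve := simpl; repeat rewrite <- app_assoc; simpl;
  repeat match goal with
  | |- Permutation [] [] => apply perm_nil
  | |- Permutation (?A ++ _) (?A ++ _) => apply Permutation_app_head
  | |- Permutation (?x :: _) _ => eapply perm_cons_pick; [pick_solve|]
  end.

Goal forall n, Permutation [tr_num n; Rec; tr_nil] [Rec; tr_nil; tr_num n].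
Proof. intros. perm_solve. Qed.

Lemma closed_wf : forall t, wf_term t -> closed_at 0 (tr_term t).
Proof. intros; apply closed_tr_term; auto. Qed.
Lemma subst_closed0 : forall P k U, closed_at 0 P -> subst_rec k U P = P.
Proof. intros; eapply subst_closed; eauto; lia. Qed.
Lemma subst_lamren_closed : forall t k U, wf_at 1 t ->
  subst_rec (S (S k)) U (rename lam_ren (tr_term t)) = rename lam_ren (tr_term t).
Proof.
  intros. eapply subst_closed; [|instantiate (1 := 2); lia].
  eapply closed_rename; [apply closed_tr_term; eauto|]. intros [|i] Hi; simpl; lia.
Qed.
Lemma lamB_term : forall t s V, wf_at 1 t -> wf_term s ->
  subst_rec 0 V (subst_rec 1 (tr_term s) (rename lam_ren (tr_term t))) = tr_term (open t s).
Proof.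
  intros. rewrite subst_lamren0 by (apply closed_wf; auto).
  unfold open. rewrite <- tr_open by (auto; apply closed_wf; auto).
  assert (closed_at 0 (tr_term (open_rec 0 s t))) by (apply closed_wf; apply wf_open; auto).
  rewrite (rename_id_closed _ 0) by (auto; intros; lia). apply subst_closed0; auto.
Qed.
Lemma lamB_num : forall t n V, wf_at 1 t ->
  subst_rec 0 V (subst_rec 1 (tr_num n) (rename lam_ren (tr_term t))) = tr_term (open t (TFree n)).
Proof. intros. apply (lamB_term t (TFree n)); simpl; auto. unfold wf_term; simpl; auto. Qed.

Lemma closed_nil : closed_at 0 tr_nil. Proof. simpl; lia. Qed.
Lemma closed_EN : forall T, closed_at 0 T -> closed_at 0 (EN T).
Proof. intros; simpl; repeat split; try lia. eapply closed_mono; eauto; lia. Qed.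

Lemma wf_term_stack : forall pi, Forall wf_term pi -> closed_at 0 (tr_stack pi).
Proof. apply closed_tr_stack. Qed.

Lemma closed_wf0 : forall t, wf_at 0 t -> closed_at 0 (tr_term t).
Proof. intros; apply closed_tr_term; auto. Qed.
Create HintDb clo.
Hint Resolve closed_wf0 : clo.
Hint Resolve closed_tr_num closed_wf wf_term_stack closed_nil closed_EN closed_Restart : clo.
Hint Rewrite lift_closed using (auto with clo) : rw.
Hint Rewrite subst_closed0 using (auto with clo) : rw.
Hint Rewrite subst_lamren_closed using (auto with clo) : rw.
Hint Rewrite lamB_term lamB_num using (auto with clo) : rw.
Hint Rewrite flatten_tr_term flatten_tr_num : rw.

Ltac psimpl := unfold subst; simpl;
  repeat (first [
    rewrite flatten_tr_term | rewrite flatten_tr_num |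
    match goal with |- context [subst_rec 0 ?V (subst_rec 1 (tr_term ?s) (rename lam_ren (tr_term ?t)))] =>
      rewrite (lamB_term t s V) by (auto with clo) end |
    match goal with |- context [subst_rec 0 ?V (subst_rec 1 (tr_num ?n) (rename lam_ren (tr_term ?t)))] =>
      rewrite (lamB_num t n V) by (auto with clo) end |
    match goal with |- context [subst_rec (S (S ?k)) ?U (rename lam_ren (tr_term ?t))] =>
      rewrite (subst_lamren_closed t k U) by (auto with clo) end |
    match goal with |- context [lift ?k ?P] => rewrite (lift_closed P k) by (auto with clo) end |
    match goal with |- context [subst_rec ?k ?U ?P] => rewrite (subst_closed0 P k U) by (auto with clo) end
  ]; simpl).

Ltac hyps := repeat match goal with
  | H : _ /\ _ |- _ => destruct H
  | H : Forall _ (_ :: _) |- _ => inversion H; clear H; subst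
  | H : wf_at _ (TApp _ _) |- _ => destruct H
  end.
Ltac wsolve := simpl; unfold wf_term, open in *; hyps;
  repeat (first [split | apply Forall_cons | apply Forall_nil]); auto; try (apply wf_open; simpl; auto).
Ltac fin' := hyps; eexists; split; [econstructor|split; [wsolve|psimpl; first [solve [auto with clo] | perm_solve]]].
Ltac fin a' := exists a'; split; [constructor|split; [wsolve|psimpl; first [solve [auto with clo] | perm_solve]]].

Lemma corr_tau : forall a c M Q L1 L2, wfa a -> pick (POut c M) (repr a) L1 -> pick (PIn c Q) L1 L2 ->
  exists a', astep a LTau a' /\ wfa a' /\ Permutation (flatten (subst Q M) ++ L2) (repr a').
Proof.
  intros a c M Q L1 L2 Hw H1 H2. destruct a; simpl in Hw; unfold wf_term in *.
  - destruct Hw as [Hw1 Hw2]. destruct t; simpl in H1, Hw1; [destruct n0|lia| |destruct Hw1]; simpl in H1; pk.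
    + fin (SLam1 t pi n).
    + fin (SEv t1 (t2 :: pi) n).
  - destruct Hw. destruct pi as [|s pi]; simpl in H1; pk.
    + fin (SLamR t n).
    + inversion H0; subst. fin (SLamS t s pi n).
  - simpl in H1; pk.
  - simpl in H1; pk. fin (SLamH t n).
  - simpl in H1; pk. fin (SLamB t n).
  - simpl in H1; pk. fin (SEv (open t (TFree n)) [] (S n)).
  - destruct Hw as (? & ? & ?). simpl in H1; pk. fin (SEv (open t s) pi n).
  - simpl in H1; pk. fin (SRec pi n).
  - simpl in H1; pk. fin (SCo pi n).
  - simpl in H1; pk. fin (SCo1 pi n).
  - destruct pi as [|s pi]; simpl in H1; pk.
    + fin (SDone1 n).
    + inversion Hw; subst. fin (SCoB s pi n).
  - simpl in H1; pk.
  - simpl in H1; pk.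
  - destruct Hw. simpl in H1; pk. fin (SCh t pi n).
  - destruct Hw. simpl in H1; pk.
    + fin (SChA t pi n).
    + fin (SChB t pi n).
  - destruct Hw. simpl in H1; pk. fin (SEnter t pi n).
  - destruct Hw. simpl in H1; pk. fin (SSkip pi n).
  - simpl in H1; pk.
  - destruct Hw. simpl in H1; pk. fin (SEv t [] n).
  - simpl in H1; pk.
Qed.

Lemma corr_out : forall a c P L, pick (POut c P) (repr a) L -> In c Hhid.
Proof.
  intros a c P L H. destruct a; simpl in H;
  try (destruct t as [[|?]|?|?|? ?]); try (destruct pi as [|? ?]); simpl in H; pk; simpl; tauto.
Qed.

Lemma corr_in : forall a c Q L M, wfa a -> pick (PIn c Q) (repr a) L -> ~ In c Hhid ->
  exists a', astep a (LIn c M) a' /\ wfa a' /\ Permutation (flatten (subst Q M) ++ L) (repr a').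
Proof.
  intros a c Q L M Hw H1 Hc. destruct a; simpl in Hw; unfold wf_term in *.
  all: match goal with
       | |- context [SEv ?t _ _] => destruct t as [[|?]|?|?|? ?]; [| |simpl in Hw; hyps; lia| |]
       | |- context [SLam1 _ ?pi _] => destruct pi
       | |- context [SCo1 ?pi _] => destruct pi
       | _ => idtac end.
  all: simpl in H1; pk; try (exfalso; apply Hc; simpl; tauto).
  all: fin'.
Qed.

Ltac pick_bt := (apply pick_here) + (apply pick_there; pick_bt).

Lemma corr_rev : forall a l a', astep a l a' -> wfa a -> wfa a' /\
  match l with
  | LTau => exists c M Q L1 L2, pick (POut c M) (repr a) L1 /\ pick (PIn c Q) L1 L2 /\
              Permutation (flatten (subst Q M) ++ L2) (repr a')
  | LIn c M => exists Q L, pick (PIn c Q) (repr a) L /\ Permutation (flatten (subst Q M) ++ L) (repr a')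
  | _ => True
  end.
Proof.
  intros a l a' H Hw. destruct H; simpl in Hw; unfold wf_term in *; hyps; (split; [wsolve|]).
  all: simpl repr.
  all: first [ do 5 eexists; split; [pick_bt|split; [pick_bt|psimpl; first [solve [auto with clo] | solve [perm_solve]]]]
             | do 2 eexists; split; [pick_bt|psimpl; first [solve [auto with clo] | solve [perm_solve]]] ].
Qed.

Definition corrF (X : proc) (a : ast) : Prop := wfa a /\ Permutation (flatten X) (repr a).

Lemma corr_F1 : forall X a l X', corrF X a -> lts X l X' -> relevant l ->
  exists a', wstep astep a l a' /\ corrF X' a'.
Proof.
  intros X a l X' [Hw HP] Hl Hr. pose proof (lts_pick _ _ _ Hl) as Hp. destruct l.
  - destruct Hr as [E|(c & M & E & Hc)]; [discriminate|]. inversion E; subst.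
    destruct Hp as (Q & L & H1 & H2).
    destruct (perm_pick _ _ HP _ _ H1) as (L' & H3 & H4).
    destruct (corr_in _ _ _ _ M Hw H3 Hc) as (a' & Ha & Hw' & HP').
    exists a'. split; [apply step_wstep; auto|]. split; auto.
    eapply perm_trans; [eauto|]. eapply perm_trans; [|eauto]. apply Permutation_app_head; auto.
  - destruct Hr as [E|(c & M & E & Hc)]; discriminate.
  - destruct Hp as (c & M & Q & L1 & L2 & H1 & H2 & H3).
    destruct (perm_pick _ _ HP _ _ H1) as (L1' & H4 & H5).
    destruct (perm_pick _ _ H5 _ _ H2) as (L2' & H6 & H7).
    destruct (corr_tau _ _ _ _ _ _ Hw H4 H6) as (a' & Ha & Hw' & HP').
    exists a'. split; [apply step_wstep; auto|]. split; auto.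
    eapply perm_trans; [eauto|]. eapply perm_trans; [|eauto]. apply Permutation_app_head; auto.
Qed.

Lemma corr_F2 : forall X a l a', corrF X a -> astep a l a' -> relevant l ->
  exists X', wstep lts X l X' /\ corrF X' a'.
Proof.
  intros X a l a' [Hw HP] Ha Hr. destruct (corr_rev _ _ _ Ha Hw) as [Hw' Hp].
  apply Permutation_sym in HP. destruct l.
  - destruct Hp as (Q & L & H1 & H2).
    destruct (perm_pick _ _ HP _ _ H1) as (L' & H3 & H4).
    destruct (pick_in_lts _ _ _ _ p H3) as (X' & Hl & HX).
    exists X'. split; [apply step_wstep; auto|]. split; auto.
    eapply perm_trans; [eauto|]. eapply perm_trans; [|eauto]. apply Permutation_app_head; auto.
    apply Permutation_sym; auto.
  - destruct Hr as [E|(c & M & E & Hc)]; discriminate.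
  - destruct Hp as (c & M & Q & L1 & L2 & H1 & H2 & H3).
    destruct (perm_pick _ _ HP _ _ H1) as (L1' & H4 & H5).
    destruct (perm_pick _ _ H5 _ _ H2) as (L2' & H6 & H7).
    destruct (pick_tau_lts _ _ _ _ _ _ H4 H6) as (X' & Hl & HX).
    exists X'. split; [apply step_wstep; auto|]. split; auto.
    eapply perm_trans; [eauto|]. eapply perm_trans; [|eauto]. apply Permutation_app_head; auto.
    apply Permutation_sym; auto.
Qed.

Lemma corr_outF : forall X a c M X', corrF X a -> lts X (LOut c M) X' -> In c Hhid.
Proof.
  intros X a c M X' [Hw HP] Hl. destruct (lts_pick _ _ _ Hl) as (L & H1 & H2).
  destruct (perm_pick _ _ HP _ _ H1) as (L' & H3 & H4). eapply corr_out; eauto.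
Qed.

Lemma astep_in_any : forall a c M a', astep a (LIn c M) a' -> forall M', astep a (LIn c M') a'.
Proof. intros. inversion H; subst; constructor. Qed.

Inductive ext : Type :=
  | XC (C : conf)
  | XNum (j : nat) (pi : stack) (n : nat)
  | XEnter (t : term) (n : nat)
  | XSkip (pi : stack) (n : nat)
  | XDone.

Definition xc (C : conf) : ext :=
  match C with
  | Ev (TFree f) pi n => XNum f pi n
  | _ => XC C
  end.

Inductive xstep : ext -> label -> ext -> Prop :=
  | xs_app : forall t s pi n, xstep (XC (Ev (TApp t s) pi n)) LTau (xc (Ev t (s :: pi) n))
  | xs_beta : forall t s pi n, xstep (XC (Ev (TLam t) (s :: pi) n)) LTau (xc (Ev (open t s) pi n))
  | xs_lam : forall t n M, xstep (XC (Ev (TLam t) [] n)) (LIn Nlam M) (xc (Ev (open t (TFree n)) [] (S n)))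
  | xs_suc : forall j pi n M, xstep (XNum (S j) pi n) (LIn Nsuc M) (XNum j pi n)
  | xs_z : forall pi n M, xstep (XNum 0 pi n) (LIn Nz M) (XC (Co pi n))
  | xs_done : forall n M, xstep (XC (Co [] n)) (LIn Ndone M) XDone
  | xs_chE : forall t pi n, xstep (XC (Co (t :: pi) n)) LTau (XEnter t n)
  | xs_chS : forall t pi n, xstep (XC (Co (t :: pi) n)) LTau (XSkip pi n)
  | xs_enter : forall t n M, xstep (XEnter t n) (LIn Nenter M) (xc (Ev t [] n))
  | xs_skip : forall pi n M, xstep (XSkip pi n) (LIn Nskip M) (XC (Co pi n)).

Definition extA (a : ast) : ext :=
  match a with
  | SEv t pi n => xc (Ev t pi n)
  | SLam1 t pi n => XC (Ev (TLam t) pi n)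
  | SLamR t n => XC (Ev (TLam t) [] n)
  | SLamK t n | SLamH t n | SLamB t n => xc (Ev (open t (TFree n)) [] (S n))
  | SLamS t s pi n => xc (Ev (open t s) pi n)
  | SInit pi n | SRec pi n | SCo pi n | SCo1 pi n => XC (Co pi n)
  | SDone1 n => XC (Co [] n)
  | SDone2 n => XDone
  | SCoB t pi n | SCh t pi n => XC (Co (t :: pi) n)
  | SChA t pi n | SEnter t pi n => XEnter t n
  | SEnter2 t pi n => xc (Ev t [] n)
  | SChB _ pi n => XSkip pi n
  | SSkip pi n => XSkip pi n
  end.

Definition FA (a : ast) (x : ext) : Prop := wfa a /\ x = extA a.

Lemma FA1 : forall a x l a', FA a x -> astep a l a' -> relevant l -> exists x', wstep xstep x l x' /\ FA a' x'.
Proof.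
  intros a x l a' [Hw ->] Ha Hr. exists (extA a'). split; [|split; [apply (proj1 (corr_rev _ _ _ Ha Hw))|auto]].
  destruct Ha; simpl;
  first [ apply star_refl
        | eapply star_step; [constructor|apply star_refl]
        | do 2 eexists; split; [apply star_refl|split; [constructor|apply star_refl]]
        | idtac ].
Qed.

Definition Pext (a : ast) : Prop :=
  forall l x', xstep (extA a) l x' -> relevant l -> exists a', wstep astep a l a' /\ wfa a' /\ extA a' = x'.

Lemma P_admin : forall a a1, astep a LTau a1 -> extA a1 = extA a -> Pext a1 -> Pext a.
Proof.
  intros a a1 H E HP l x' Hx Hr. rewrite <- E in Hx. destruct (HP _ _ Hx Hr) as (a' & H1 & H2 & H3).
  exists a'. split; auto. eapply wstep_star_l; eauto. econstructor; eauto. constructor.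
Qed.

Ltac one := (apply as_chA) + (apply as_chB) + econstructor.
Ltac tst := (apply star_refl) + (eapply star_step; [one | tst]).
Ltac solveP := first [ eexists; split; [tst | split; [wsolve | reflexivity]]
                     | eexists; split; [do 2 eexists; split; [tst | split; [one | tst]] | split; [wsolve | reflexivity]] ].

Lemma P_SEv : forall t pi n, wfa (SEv t pi n) -> Pext (SEv t pi n).
Proof.
  intros t pi n Hw l x' Hx Hr. simpl in Hw; unfold wf_term in *; hyps.
  destruct t as [[|j]|i|t|t1 t2]; simpl in Hx; inversion Hx; subst; solveP.
Qed.

Lemma P_all : forall a, wfa a -> Pext a.
Proof.
  intros a Hw. destruct a; simpl in Hw; unfold wf_term in *; hyps.
  all: try (intros l x' Hx Hr; try (destruct pi); simpl in Hx; inversion Hx; subst; solveP; fail).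
  - apply P_SEv; simpl; auto.
  - apply (P_admin _ (SLamH t n)); [constructor|reflexivity|].
    apply (P_admin _ (SLamB t n)); [constructor|reflexivity|].
    apply (P_admin _ (SEv (open t (TFree n)) [] (S n))); [constructor|reflexivity|].
    apply P_SEv; wsolve.
  - apply (P_admin _ (SLamB t n)); [constructor|reflexivity|].
    apply (P_admin _ (SEv (open t (TFree n)) [] (S n))); [constructor|reflexivity|].
    apply P_SEv; wsolve.
  - apply (P_admin _ (SEv (open t (TFree n)) [] (S n))); [constructor|reflexivity|].
    apply P_SEv; wsolve.
  - apply (P_admin _ (SEv (open t s) pi n)); [constructor|reflexivity|].
    apply P_SEv; wsolve.
  - apply (P_admin _ (SEv t [] n)); [constructor|reflexivity|]; apply P_SEv; wsolve.
Qed.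

Lemma FA2 : forall x a l x', FA a x -> xstep x l x' -> relevant l -> exists a', wstep astep a l a' /\ FA a' x'.
Proof.
  intros x a l x' [Hw ->] Hx Hr. destruct (P_all a Hw _ _ Hx Hr) as (a' & H1 & H2 & H3).
  exists a'. split; auto. split; auto.
Qed.

Lemma mtau_det : forall C C1 C2, mtau C C1 -> mtau C C2 -> C1 = C2.
Proof. intros. inversion H; subst; inversion H0; subst; auto. Qed.

Lemma mflag_notau : forall C F C' D, mflag C F C' -> ~ mtau C D.
Proof. intros. intro. inversion H; subst; inversion H0. Qed.

Lemma mterm_notau : forall C F D, mterm C F -> ~ mtau C D.
Proof. intros. intro. inversion H; subst; inversion H0. Qed.

Lemma mtaus_trans : forall A B C, mtaus A B -> mtaus B C -> mtaus A C.
Proof. induction 1; intros; auto. econstructor; eauto. Qed.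

Lemma mtaus_det : forall X Y Z, mtaus X Y -> mtaus X Z -> (forall W, ~ mtau Z W) -> mtaus Y Z.
Proof.
  intros X Y Z H. revert Z. induction H; intros Z H1 H2; auto.
  inversion H1; subst.
  - exfalso. eapply H2; eauto.
  - rewrite (mtau_det _ _ _ H H3) in *. auto.
Qed.

Lemma mtaus_stuck : forall X Y, mtaus X Y -> (forall W, ~ mtau X W) -> Y = X.
Proof. intros. inversion H; subst; auto. exfalso; eapply H0; eauto. Qed.

Lemma mbisim_is : machine_bisimulation mbisimilar.
Proof.
  split.
  - intros C1 C2 (R & HR & H). exists R. split; auto. apply (proj1 HR); auto.
  - intros C1 C2 (R & HR & H) F. destruct (proj2 HR _ _ H F) as [H1 H2]. split; auto.
    intros. destruct (H1 _ _ H0 H3) as (C2m & C2' & ? & ? & ?). exists C2m, C2'. split; auto. split; auto.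
    exists R; auto.
Qed.

Lemma mbisim_sym : forall C1 C2, mbisimilar C1 C2 -> mbisimilar C2 C1.
Proof. intros. apply (proj1 mbisim_is); auto. Qed.

Lemma mbisim_taus : forall C1 C2 C1', mbisimilar C1 C2 -> mtaus C1 C1' -> mbisimilar C1' C2.
Proof.
  intros C1 C2 C1' H Ht.
  exists (fun A B => exists A0 B0, mtaus A0 A /\ mtaus B0 B /\ mbisimilar A0 B0). split.
  2: { exists C1, C2. split; auto. split; [constructor|auto]. }
  split.
  - intros A B (A0 & B0 & H1 & H2 & H3). exists B0, A0. split; auto. split; auto. apply mbisim_sym; auto.
  - intros A B (A0 & B0 & H1 & H2 & H3) F. destruct (proj2 mbisim_is _ _ H3 F) as [G1 G2]. split.
    + intros Am A' H4 H5. destruct (G1 Am A') as (Bm & B' & H6 & H7 & H8).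
      * eapply mtaus_trans; eauto.
      * auto.
      * exists Bm, B'. split; [eapply mtaus_det; eauto; intros W; eapply mflag_notau; eauto|].
        split; auto. exists A', B'. split; [constructor|split; [constructor|auto]].
    + intros Am H4 H5. destruct (G2 Am) as (Bm & H6 & H7); [eapply mtaus_trans; eauto|auto|].
      exists Bm. split; auto. eapply mtaus_det; eauto. intros W; eapply mterm_notau; eauto.
Qed.

Lemma wf_mtau : forall C C', wf_conf C -> mtau C C' -> wf_conf C'.
Proof.
  intros. inversion H0; subst; simpl in *; unfold wf_term in *; simpl in *.
  - destruct H as [[? ?] ?]. split; auto.
  - destruct H as [? H1]. inversion H1; subst. split; auto. apply wf_open; auto.
Qed.

Lemma wf_mtaus : forall C C', wf_conf C -> mtaus C C' -> wf_conf C'.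
Proof. intros. induction H0; auto. apply IHmtaus. eapply wf_mtau; eauto. Qed.

Lemma wf_mflag : forall C F C', wf_conf C -> mflag C F C' -> wf_conf C'.
Proof.
  intros. inversion H0; subst; simpl in *; unfold wf_term in *; simpl in *; auto.
  - split; auto. apply wf_open; simpl; auto. destruct H; auto.
  - destruct H; auto.
  - inversion H; subst; auto.
  - inversion H; subst; auto.
Qed.

Lemma mtau_xstep : forall C C', mtau C C' -> xstep (xc C) LTau (xc C').
Proof. intros. inversion H; subst; constructor. Qed.

Lemma mtaus_xstar : forall C C', mtaus C C' -> star xstep (xc C) (xc C').
Proof. induction 1; [constructor|]. econstructor; eauto. apply mtau_xstep; auto. Qed.

Lemma xstep_xc_tau : forall D y, xstep (xc D) LTau y ->
  (exists D', mtau D D' /\ y = xc D') \/ (exists t pi n, D = Co (t :: pi) n /\ (y = XEnter t n \/ y = XSkip pi n)).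
Proof.
  intros D y H. destruct D as [[f|i|t|t s] pi n|pi n]; simpl in H; inversion H; subst.
  - left. eexists; split; [constructor|auto].
  - left. eexists; split; [constructor|auto].
  - right. eauto 6.
  - right. eauto 6.
Qed.

Lemma xstep_xc_in : forall D c M z, xstep (xc D) (LIn c M) z ->
  (c = Nlam /\ exists t n, D = Ev (TLam t) [] n /\ z = xc (Ev (open t (TFree n)) [] (S n))) \/
  (c = Nsuc /\ exists j pi n, D = Ev (TFree (S j)) pi n /\ z = XNum j pi n) \/
  (c = Nz /\ exists pi n, D = Ev (TFree 0) pi n /\ z = XC (Co pi n)) \/
  (c = Ndone /\ exists n, D = Co [] n /\ z = XDone).
Proof.
  intros D c M z H. destruct D as [[f|i|t|t s] pi n|pi n]; simpl in H; inversion H; subst; eauto 10.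
Qed.

Lemma xstar_fin : forall x z, star xstep x z -> (forall y, ~ xstep x LTau y) -> z = x.
Proof. intros. inversion H; subst; auto. exfalso; eapply H0; eauto. Qed.

Lemma xstar_inv : forall D z, star xstep (xc D) z ->
  (exists D', mtaus D D' /\ z = xc D') \/
  (exists t pi n, mtaus D (Co (t :: pi) n) /\ (z = XEnter t n \/ z = XSkip pi n)).
Proof.
  intros D z H. remember (xc D) as x. revert D Heqx. induction H; intros D E; subst.
  - left. exists D. split; [constructor|auto].
  - destruct (xstep_xc_tau _ _ H) as [(D' & H1 & ->)|(t & pi & n & -> & [->| ->])].
    + destruct (IHstar D' eq_refl) as [(D'' & ? & ?)|(t & pi & n & ? & ?)].
      * left. exists D''. split; auto. econstructor; eauto.
      * right. exists t, pi, n. split; auto. econstructor; eauto.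
    + right. exists t, pi, n. split; [constructor|]. left. apply xstar_fin; auto. intros y Hy; inversion Hy.
    + right. exists t, pi, n. split; [constructor|]. right. apply xstar_fin; auto. intros y Hy; inversion Hy.
Qed.

Inductive Rx : ext -> ext -> Prop :=
  | rx_c : forall C1 C2, mbisimilar C1 C2 -> wf_conf C1 -> wf_conf C2 -> Rx (xc C1) (xc C2)
  | rx_num : forall j pi n pi' n', mbisimilar (Co pi n) (Co pi' n') -> wf_conf (Co pi n) -> wf_conf (Co pi' n') ->
      Rx (XNum j pi n) (XNum j pi' n')
  | rx_en : forall t n t' n', mbisimilar (Ev t [] n) (Ev t' [] n') -> wf_conf (Ev t [] n) -> wf_conf (Ev t' [] n') ->
      Rx (XEnter t n) (XEnter t' n')
  | rx_sk : forall pi n pi' n', mbisimilar (Co pi n) (Co pi' n') -> wf_conf (Co pi n) -> wf_conf (Co pi' n') ->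
      Rx (XSkip pi n) (XSkip pi' n')
  | rx_done : Rx XDone XDone.

Lemma flag_match : forall C1 C2 F C1', mbisimilar C1 C2 -> mflag C1 F C1' ->
  exists C2m C2', mtaus C2 C2m /\ mflag C2m F C2' /\ mbisimilar C1' C2'.
Proof.
  intros. destruct (proj2 mbisim_is _ _ H F) as [H1 _]. apply (H1 C1 C1'); auto. constructor.
Qed.

Lemma wstep_in : forall x1 x2 y c M z, star xstep x1 x2 -> xstep x2 (LIn c M) y -> star xstep y z ->
  wstep xstep x1 (LIn c M) z.
Proof. intros. exists x2, y. auto. Qed.

Lemma Rx_WB : WB xstep Rx.
Proof.
  split.
  - intros a b H. inversion H; subst; constructor; auto; apply mbisim_sym; auto.
  - intros a b l a' H Hs Hr. inversion H; subst.
    + destruct C1 as [[f|i|t|t s] pi n|[|t pi] n]; simpl in Hs; inversion Hs; subst.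
      *
        destruct (flag_match _ _ _ _ H0 (mflag_var (S j) pi n)) as (C2m & C2' & H3 & H4 & H5).
        inversion H4; subst. exists (XNum j pi0 n0). split.
        { eapply wstep_in; [apply (mtaus_xstar _ _ H3)|simpl; constructor|constructor]. }
        pose proof (wf_mtaus _ _ H2 H3). constructor; auto; simpl in *; hyps; auto.
      *
        destruct (flag_match _ _ _ _ H0 (mflag_var 0 pi n)) as (C2m & C2' & H3 & H4 & H5).
        inversion H4; subst. exists (XC (Co pi0 n0)). split.
        { eapply wstep_in; [apply (mtaus_xstar _ _ H3)|simpl; constructor|constructor]. }
        pose proof (wf_mtaus _ _ H2 H3). apply (rx_c (Co pi n) (Co pi0 n0)); auto; simpl in *; hyps; auto.
      *
        exists (xc C2). split; [constructor|]. constructor; auto.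
        -- eapply (mbisim_taus _ _ _ H0). econstructor; [constructor|constructor].
        -- eapply (wf_mtau _ _ H1). constructor.
      *
        destruct (flag_match _ _ _ _ H0 (mflag_lam t n)) as (C2m & C2' & H3 & H4 & H5).
        inversion H4; subst. eexists. split.
        { eapply wstep_in; [apply (mtaus_xstar _ _ H3)|simpl; constructor|constructor]. }
        constructor; auto.
        -- eapply (wf_mflag _ _ _ H1). constructor.
        -- eapply wf_mflag; [|eauto]. eapply (wf_mtaus _ _ H2); eauto.
      *
        exists (xc C2). split; [constructor|]. constructor; auto.
        -- eapply (mbisim_taus _ _ _ H0). econstructor; [constructor|constructor].
        -- eapply (wf_mtau _ _ H1). constructor.
      *
        destruct (proj2 (proj2 mbisim_is _ _ H0 FDone) (Co [] n)) as (C2m & H3 & H4); [constructor|constructor|].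
        inversion H4; subst. exists XDone. split; [|constructor].
        eapply wstep_in; [apply (mtaus_xstar _ _ H3)|simpl; constructor|constructor].
      *
        destruct (flag_match _ _ _ _ H0 (mflag_enter t pi n)) as (C2m & C2' & H3 & H4 & H5).
        inversion H4; subst. exists (XEnter t0 n0). split.
        { eapply star_trans; [apply (mtaus_xstar _ _ H3)|]. econstructor; [simpl; constructor|constructor]. }
        pose proof (wf_mtaus _ _ H2 H3). constructor; auto; simpl in *; hyps; auto.
      *
        destruct (flag_match _ _ _ _ H0 (mflag_skip t pi n)) as (C2m & C2' & H3 & H4 & H5).
        inversion H4; subst. exists (XSkip pi0 n0). split.
        { eapply star_trans; [apply (mtaus_xstar _ _ H3)|]. econstructor; [simpl; constructor|constructor]. }
        pose proof (wf_mtaus _ _ H2 H3). constructor; auto; simpl in *; hyps; auto.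
    + inversion Hs; subst.
      * exists (XNum j0 pi' n'). split; [eapply wstep_in; [constructor|constructor|constructor]|]. constructor; auto.
      * exists (XC (Co pi' n')). split; [eapply wstep_in; [constructor|constructor|constructor]|].
        apply (rx_c (Co pi n) (Co pi' n')); auto.
    + inversion Hs; subst. exists (xc (Ev t' [] n')). split; [eapply wstep_in; [constructor|constructor|constructor]|].
      constructor; auto.
    + inversion Hs; subst. exists (XC (Co pi' n')). split; [eapply wstep_in; [constructor|constructor|constructor]|].
      apply (rx_c (Co pi n) (Co pi' n')); auto.
    + inversion Hs.
Qed.

Section Compl.
Variable R : ext -> ext -> Prop.
Hypothesis HR : WB xstep R.

Lemma xenter_star : forall t n z, star xstep (XEnter t n) z -> z = XEnter t n.
Proof. intros. apply xstar_fin; auto. intros y Hy; inversion Hy. Qed.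
Lemma xskip_star : forall pi n z, star xstep (XSkip pi n) z -> z = XSkip pi n.
Proof. intros. apply xstar_fin; auto. intros y Hy; inversion Hy. Qed.

Lemma no_enter : forall t n C, R (XEnter t n) (xc C) -> False.
Proof.
  intros t n C H.
  destruct (proj2 HR _ _ (LIn Nenter PNil) _ H (xs_enter t n PNil)) as (y & Hy & _).
  { right. exists Nenter, PNil. split; auto. simpl; intuition discriminate. }
  destruct Hy as (z1 & z2 & H1 & H2 & H3).
  destruct (xstar_inv _ _ H1) as [(D & HD & ->)|(t1 & pi1 & n1 & HD & [->| ->])].
  - destruct (xstep_xc_in _ _ _ _ H2) as [[E _]|[[E _]|[[E _]|[E _]]]]; discriminate.
  - assert (Hs : star xstep (xc C) (XSkip pi1 n1)).
    { eapply star_trans; [apply (mtaus_xstar _ _ HD)|]. econstructor; [simpl; constructor|constructor]. }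
    destruct (WB_star _ _ _ HR _ _ _ ((proj1 HR) _ _ H) Hs) as (w & Hw & HRw).
    apply xenter_star in Hw; subst.
    destruct (proj2 HR _ _ (LIn Nskip PNil) _ HRw (xs_skip pi1 n1 PNil)) as (y' & Hy' & _).
    { right. exists Nskip, PNil. split; auto. simpl; intuition discriminate. }
    destruct Hy' as (w1 & w2 & G1 & G2 & G3). apply xenter_star in G1; subst. inversion G2.
  - inversion H2.
Qed.

Lemma no_skip : forall pi n C, R (XSkip pi n) (xc C) -> False.
Proof.
  intros pi n C H.
  destruct (proj2 HR _ _ (LIn Nskip PNil) _ H (xs_skip pi n PNil)) as (y & Hy & _).
  { right. exists Nskip, PNil. split; auto. simpl; intuition discriminate. }
  destruct Hy as (z1 & z2 & H1 & H2 & H3).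
  destruct (xstar_inv _ _ H1) as [(D & HD & ->)|(t1 & pi1 & n1 & HD & [->| ->])].
  - destruct (xstep_xc_in _ _ _ _ H2) as [[E _]|[[E _]|[[E _]|[E _]]]]; discriminate.
  - inversion H2.
  - assert (Hs : star xstep (xc C) (XEnter t1 n1)).
    { eapply star_trans; [apply (mtaus_xstar _ _ HD)|]. econstructor; [simpl; constructor|constructor]. }
    destruct (WB_star _ _ _ HR _ _ _ ((proj1 HR) _ _ H) Hs) as (w & Hw & HRw).
    apply xskip_star in Hw; subst.
    destruct (proj2 HR _ _ (LIn Nenter PNil) _ HRw (xs_enter t1 n1 PNil)) as (y' & Hy' & _).
    { right. exists Nenter, PNil. split; auto. simpl; intuition discriminate. }
    destruct Hy' as (w1 & w2 & G1 & G2 & G3). apply xskip_star in G1; subst. inversion G2.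
Qed.

Lemma star_xc : forall C D z, star xstep (xc D) z -> R (xc C) z ->
  exists D', mtaus D D' /\ z = xc D'.
Proof.
  intros C D z H1 H2. destruct (xstar_inv _ _ H1) as [?|(t & pi & n & _ & [->| ->])]; auto.
  - exfalso. eapply no_enter. apply (proj1 HR); eauto.
  - exfalso. eapply no_skip. apply (proj1 HR); eauto.
Qed.

Lemma relIn : forall c, In c [Nlam; Nsuc; Nz; Nenter; Nskip; Ndone] -> relevant (LIn c PNil).
Proof. intros c Hc. right. exists c, PNil. split; auto. simpl in *; intuition subst; discriminate. Qed.

Lemma xin_inv : forall D z1 c M z2, star xstep (xc D) z1 -> xstep z1 (LIn c M) z2 ->
  c <> Nenter -> c <> Nskip -> exists D1, mtaus D D1 /\ xstep (xc D1) (LIn c M) z2.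
Proof.
  intros D z1 c M z2 H1 H2 Hc1 Hc2.
  destruct (xstar_inv _ _ H1) as [(D1 & ? & ->)|(t & pi & n & _ & [->| ->])]; eauto;
  inversion H2; subst; congruence.
Qed.

Lemma numL : forall j pi n E, R (XNum j pi n) (xc E) ->
  exists pi' n' E', mtaus E (Ev (TFree j) pi' n') /\ mtaus (Co pi' n') E' /\ R (xc (Co pi n)) (xc E').
Proof.
  induction j; intros pi n E H.
  - destruct (proj2 HR _ _ _ _ H (xs_z pi n PNil) (relIn Nz ltac:(simpl; tauto))) as (y & Hy & HRy).
    destruct Hy as (z1 & z2 & H1 & H2 & H3).
    destruct (xin_inv _ _ _ _ _ H1 H2) as (D1 & HD1 & H4); try discriminate.
    destruct (xstep_xc_in _ _ _ _ H4) as [[E1 _]|[[E1 _]|[(_ & pi' & n' & -> & ->)|[E1 _]]]]; try discriminate.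
    destruct (star_xc (Co pi n) (Co pi' n') _ H3 HRy) as (E' & HE' & ->).
    exists pi', n', E'. auto.
  - destruct (proj2 HR _ _ _ _ H (xs_suc j pi n PNil) (relIn Nsuc ltac:(simpl; tauto))) as (y & Hy & HRy).
    destruct Hy as (z1 & z2 & H1 & H2 & H3).
    destruct (xin_inv _ _ _ _ _ H1 H2) as (D1 & HD1 & H4); try discriminate.
    destruct (xstep_xc_in _ _ _ _ H4) as [[E1 _]|[(_ & j' & pi' & n' & -> & ->)|[[E1 _]|[E1 _]]]]; try discriminate.
    destruct (star_xc (Ev (TFree j) pi n) (Ev (TFree j') pi' n') _ H3 HRy) as (E' & HE' & ->).
    apply mtaus_stuck in HE'; [|intros W HW; inversion HW]. subst.
    destruct (IHj _ _ _ HRy) as (pi'' & n'' & E'' & G1 & G2 & G3).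
    apply mtaus_stuck in G1; [|intros W HW; inversion HW]. inversion G1; subst.
    exists pi', n', E''. split; auto.
Qed.

Definition Rm (C1 C2 : conf) : Prop := exists D1 D2, mtaus C1 D1 /\ mtaus C2 D2 /\ R (xc D1) (xc D2).

Lemma Rm_bisim : machine_bisimulation Rm.
Proof.
  split.
  - intros C1 C2 (D1 & D2 & H1 & H2 & H3). exists D2, D1. split; auto. split; auto. apply (proj1 HR); auto.
  - intros C1 C2 (D1 & D2 & H1 & H2 & H3) F. split.
    + intros C1m C1' G1 G2.
      assert (G3 : mtaus D1 C1m) by (eapply mtaus_det; eauto; intros W; eapply mflag_notau; eauto).
      destruct (WB_star _ _ _ HR _ _ _ H3 (mtaus_xstar _ _ G3)) as (w & Hw & HRw).
      destruct (star_xc _ _ _ Hw HRw) as (E & HE & ->).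
      inversion G2; subst.
      *
        destruct (proj2 HR _ _ _ _ HRw (xs_lam t n PNil) (relIn Nlam ltac:(simpl; tauto))) as (y & Hy & HRy).
        destruct Hy as (z1 & z2 & K1 & K2 & K3).
        destruct (xin_inv _ _ _ _ _ K1 K2) as (E1 & HE1 & K4); try discriminate.
        destruct (xstep_xc_in _ _ _ _ K4) as [(_ & t' & n' & -> & ->)|[[E1' _]|[[E1' _]|[E1' _]]]]; try discriminate.
        destruct (star_xc _ _ _ K3 HRy) as (E2 & HE2 & ->).
        exists (Ev (TLam t') [] n'), (Ev (open t' (TFree n')) [] (S n')). split; [|split; [constructor|]].
        -- eapply mtaus_trans; eauto. eapply mtaus_trans; eauto.
        -- exists (Ev (open t (TFree n)) [] (S n)), E2. split; [constructor|]. split; auto.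
      *
        destruct (numL _ _ _ _ HRw) as (pi' & n' & E' & K1 & K2 & K3).
        exists (Ev (TFree f) pi' n'), (Co pi' n'). split; [|split; [constructor|]].
        -- eapply mtaus_trans; eauto. eapply mtaus_trans; eauto.
        -- exists (Co pi n), E'. split; [constructor|]. split; auto.
      *
        assert (Hw' : wstep xstep (xc (Co (t :: pi) n)) (LIn Nenter PNil) (xc (Ev t [] n))).
        { exists (XEnter t n), (xc (Ev t [] n)). split; [econstructor; [constructor|constructor]|].
          split; constructor. }
        destruct (WB_wstep _ _ _ HR _ _ _ _ HRw Hw' (relIn Nenter ltac:(simpl; tauto))) as (y & Hy & HRy).
        destruct Hy as (z1 & z2 & K1 & K2 & K3).
        destruct (xstar_inv _ _ K1) as [(D & HD & ->)|(t1 & pi1 & n1 & HD & [->| ->])].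
        -- destruct (xstep_xc_in _ _ _ _ K2) as [[E1 _]|[[E1 _]|[[E1 _]|[E1 _]]]]; discriminate.
        -- inversion K2; subst. destruct (star_xc _ _ _ K3 HRy) as (E2 & HE2 & ->).
           exists (Co (t1 :: pi1) n1), (Ev t1 [] n1). split; [|split; [constructor|]].
           ++ eapply mtaus_trans; eauto. eapply mtaus_trans; eauto.
           ++ exists (Ev t [] n), E2. split; [constructor|]. split; auto.
        -- inversion K2.
      *
        assert (Hw' : wstep xstep (xc (Co (t :: pi) n)) (LIn Nskip PNil) (xc (Co pi n))).
        { exists (XSkip pi n), (xc (Co pi n)). split; [econstructor; [constructor|constructor]|].
          split; constructor. }
        destruct (WB_wstep _ _ _ HR _ _ _ _ HRw Hw' (relIn Nskip ltac:(simpl; tauto))) as (y & Hy & HRy).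
        destruct Hy as (z1 & z2 & K1 & K2 & K3).
        destruct (xstar_inv _ _ K1) as [(D & HD & ->)|(t1 & pi1 & n1 & HD & [->| ->])].
        -- destruct (xstep_xc_in _ _ _ _ K2) as [[E1 _]|[[E1 _]|[[E1 _]|[E1 _]]]]; discriminate.
        -- inversion K2.
        -- inversion K2; subst. destruct (star_xc (Co pi n) (Co pi1 n1) _ K3 HRy) as (E2 & HE2 & ->).
           exists (Co (t1 :: pi1) n1), (Co pi1 n1). split; [|split; [constructor|]].
           ++ eapply mtaus_trans; eauto. eapply mtaus_trans; eauto.
           ++ exists (Co pi n), E2. split; [constructor|]. split; auto.
    + intros C1m G1 G2.
      assert (G3 : mtaus D1 C1m) by (eapply mtaus_det; eauto; intros W; eapply mterm_notau; eauto).
      destruct (WB_star _ _ _ HR _ _ _ H3 (mtaus_xstar _ _ G3)) as (w & Hw & HRw).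
      destruct (star_xc _ _ _ Hw HRw) as (E & HE & ->).
      inversion G2; subst.
      destruct (proj2 HR _ _ _ _ HRw (xs_done n PNil) (relIn Ndone ltac:(simpl; tauto))) as (y & Hy & HRy).
      destruct Hy as (z1 & z2 & K1 & K2 & K3).
      destruct (xin_inv _ _ _ _ _ K1 K2) as (E1 & HE1 & K4); try discriminate.
      destruct (xstep_xc_in _ _ _ _ K4) as [[E1' _]|[[E1' _]|[[E1' _]|(_ & n' & -> & ->)]]]; try discriminate.
      exists (Co [] n'). split; [|constructor]. eapply mtaus_trans; eauto. eapply mtaus_trans; eauto.
Qed.
End Compl.

Lemma compl_ext : forall R, WB xstep R -> forall C1 C2, R (xc C1) (xc C2) -> mbisimilar C1 C2.
Proof.
  intros R HR C1 C2 H. exists (Rm R). split; [apply Rm_bisim; auto|]. exists C1, C2. split; [constructor|split; [constructor|auto]].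
Qed.

Fixpoint padn (k : nat) (X : proc) : proc :=
  match k with 0 => X | S k' => PPar (padn k' X) PNil end.

Lemma nil_nostep : forall l Z, ~ lts PNil l Z.
Proof. intros l Z H; inversion H. Qed.

Lemma lts_pad_inv : forall k X l Z, lts (padn k X) l Z -> exists X', lts X l X' /\ Z = padn k X'.
Proof.
  induction k; simpl; intros X l Z H; eauto.
  apply lts_par_inv in H.
  destruct H as [(P1 & Hst & ->)|[(R1 & Hst & ->)|[(a & M & P1 & R1 & -> & Hs1 & Hs2 & ->)|(a & M & P1 & R1 & -> & Hs1 & Hs2 & ->)]]];
  try (exfalso; eapply nil_nostep; eauto; fail).
  destruct (IHk _ _ _ Hst) as (X' & ? & ->). exists X'. auto.
Qed.

Lemma lts_pad : forall k X l X', lts X l X' -> lts (padn k X) l (padn k X').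
Proof. induction k; simpl; intros; auto. constructor; auto. Qed.

Lemma star_pad : forall k X X', star lts X X' -> star lts (padn k X) (padn k X').
Proof. intros k X X' H; induction H; [constructor|]. econstructor; [apply lts_pad; eauto|auto]. Qed.

Lemma star_pad_inv : forall k X Z, star lts (padn k X) Z -> exists X', Z = padn k X' /\ star lts X X'.
Proof.
  intros k X Z H. remember (padn k X) as P. revert X HeqP. induction H; intros; subst.
  - exists X; split; auto; constructor.
  - destruct (lts_pad_inv _ _ _ _ H) as (X1 & H1 & ->).
    destruct (IHstar X1 eq_refl) as (X' & -> & H2). exists X'. split; auto. econstructor; eauto.
Qed.

Lemma bb_star : forall Rel, barbed_bisimulation Hhid Rel -> forall P Q P', Rel P Q -> star lts P P' ->
  exists Q', star lts Q Q' /\ Rel P' Q'.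
Proof.
  intros Rel HB P Q P' HR Hs. revert Q HR. induction Hs; intros.
  - exists Q; split; auto; constructor.
  - destruct (proj2 (proj2 (proj2 HB _ _ HR)) _ H) as (Q1 & H1 & H2).
    destruct (IHHs _ H2) as (Q2 & ? & ?). exists Q2. split; auto.
    eapply star_trans; [apply taus_star; eauto|auto].
Qed.

Lemma star_ctx_inv : forall k c Y Q', star lts (PPar (padn k Y) (POut c PNil)) Q' ->
  (exists Y', star lts Y Y' /\ Q' = PPar (padn k Y') (POut c PNil)) \/
  (exists Y1 Y2 Y', star lts Y Y1 /\ lts Y1 (LIn c PNil) Y2 /\ star lts Y2 Y' /\ Q' = padn (S k) Y').
Proof.
  intros k c Y Q' H. remember (PPar (padn k Y) (POut c PNil)) as P. revert Y HeqP.
  induction H; intros; subst.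
  - left. exists Y. split; auto. constructor.
  - apply lts_par_inv in H.
    destruct H as [(P1 & Hst & ->)|[(R1 & Hst & ->)|[(a & M & P1 & R1 & E & Hs1 & Hs2 & ->)|(a & M & P1 & R1 & E & Hs1 & Hs2 & ->)]]].
    + destruct (lts_pad_inv _ _ _ _ Hst) as (Y1 & H1 & ->).
      destruct (IHstar Y1 eq_refl) as [(Y' & ? & ->)|(Ya & Yb & Y' & ? & ? & ? & ->)].
      * left. exists Y'. split; auto. econstructor; eauto.
      * right. exists Ya, Yb, Y'. split; auto. econstructor; eauto.
    + inversion Hst.
    + inversion Hs2.
    + inversion Hs2; subst. destruct (lts_pad_inv _ _ _ _ Hs1) as (Y2 & H1 & ->).
      change (PPar (padn k Y2) PNil) with (padn (S k) Y2) in H0.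
      destruct (star_pad_inv _ _ _ H0) as (Y' & -> & H2).
      right. exists Y, Y2, Y'. split; [constructor|]. auto.
Qed.

Definition Wa (a b : ast) : Prop :=
  exists X Y Rel k, corrF X a /\ corrF Y b /\ barbed_bisimulation Hhid Rel /\ Rel (padn k X) (padn k Y).

Lemma wstep_astep_in_any : forall b c M b' M', wstep astep b (LIn c M) b' -> wstep astep b (LIn c M') b'.
Proof.
  intros b c M b' M' (b1 & b2 & H1 & H2 & H3). exists b1, b2. split; auto. split; auto.
  eapply astep_in_any; eauto.
Qed.

Lemma corr_F1' : forall X a l X', corrF X a -> lts X l X' -> relevant l -> exists a', wstep astep a l a' /\ corrF X' a'.
Proof. exact corr_F1. Qed.

Lemma Wa_WB : WB astep Wa.
Proof.
  split.
  - intros a b (X & Y & Rel & k & H1 & H2 & H3 & H4). exists Y, X, Rel, k. split; auto. split; auto. split; auto.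
    apply (proj1 H3); auto.
  - intros a b l a' (X & Y & Rel & k & HX & HY & HB & HR) Ha Hr. destruct l as [c M|c M|].
    + destruct Hr as [E|(c' & M' & E & Hc)]; [discriminate|]. inversion E; subst c' M'.
      assert (Hr0 : relevant (LIn c PNil)) by (right; exists c, PNil; auto).
      pose proof (astep_in_any _ _ _ _ Ha PNil) as Ha0.
      destruct (corr_F2 _ _ _ _ HX Ha0 Hr0) as (X' & (X1 & X2 & HX1 & HX2 & HX3) & HX').
      assert (Hf : Hfree (POut c PNil)) by (intros b0 Hb0; simpl in Hb0; destruct Hb0 as [<-|[]]; auto).
      pose proof (proj1 (proj2 (proj2 HB _ _ HR)) _ Hf) as HR0.
      assert (Hs : star lts (PPar (padn k X) (POut c PNil)) (padn (S k) X')).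
      { eapply star_trans; [apply star_parL; apply star_pad; eauto|].
        econstructor; [eapply lts_commR; [apply lts_pad; eauto|constructor]|].
        apply (star_pad (S k)); auto. }
      destruct (bb_star _ HB _ _ _ HR0 Hs) as (Q' & HQ & HRQ).
      destruct (star_ctx_inv _ _ _ _ HQ) as [(Y' & HY1 & ->)|(Y1 & Y2 & Y' & HY1 & HY2 & HY3 & ->)].
      * exfalso.
        assert (Hb : has_barb Hhid (PPar (padn k Y') (POut c PNil)) (BOut c)).
        { simpl. split; auto. exists PNil, (PPar (padn k Y') PNil). apply lts_parR. constructor. }
        destruct (proj1 (proj2 HB _ _ ((proj1 HB) _ _ HRQ)) _ Hb) as (Z & HZ & HbZ).
        apply taus_star in HZ. destruct (star_pad_inv _ _ _ HZ) as (X'' & -> & HX'').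
        destruct HbZ as [_ (Q0 & R0 & Hl)].
        destruct (lts_pad_inv _ _ _ _ Hl) as (X3 & Hl3 & _).
        destruct (F_star lts astep corrF corr_F1' _ _ _ HX' HX'') as (a'' & _ & Ha'').
        apply Hc. eapply corr_outF; eauto.
      * destruct (F_wstep lts astep corrF corr_F1' Y b (LIn c PNil) Y' HY) as (b' & Hb' & HYb').
        { exists Y1, Y2. auto. }
        { auto. }
        exists b'. split; [eapply wstep_astep_in_any; eauto|].
        exists X', Y', Rel, (S k). auto.
    + destruct Hr as [E|(c' & M' & E & Hc)]; discriminate.
    + assert (Hr0 : relevant LTau) by (left; auto).
      destruct (corr_F2 _ _ _ _ HX Ha Hr0) as (X' & HwX & HX').
      destruct (bb_star _ HB _ _ _ HR (star_pad k _ _ HwX)) as (Q' & HQ & HRQ).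
      destruct (star_pad_inv _ _ _ HQ) as (Y' & -> & HY').
      destruct (F_star lts astep corrF corr_F1' _ _ _ HY HY') as (b' & Hb' & HYb').
      exists b'. split; auto. exists X', Y', Rel, k. auto.
Qed.

Definition ast_of (C : conf) : ast :=
  match C with Ev t pi n => SEv t pi n | Co pi n => SCo pi n end.

Lemma corr_init : forall C, wf_conf C -> corrF (tr_conf C) (ast_of C).
Proof.
  intros [t pi n|pi n] H; split; simpl in *; auto.
  all: try rewrite flatten_tr_term; perm_solve.
Qed.

Lemma FA_init : forall C, wf_conf C -> FA (ast_of C) (xc C).
Proof. intros [t pi n|pi n] H; split; simpl in *; auto. Qed.

Theorem theorem4p14 (C C' : conf) :
  wf_conf C -> wf_conf C' ->
  (mbisimilar C C' <-> barbed_equiv Hhid (tr_conf C) (tr_conf C')).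
Proof.
  intros HC HC'. split.
  - intros Hm.
    pose proof (transfer ast ext astep xstep FA FA1 (fun a x l x' H1 H2 H3 => FA2 x a l x' H1 H2 H3) Rx Rx_WB) as HA.
    pose proof (transfer proc ast lts astep corrF corr_F1 corr_F2 _ HA) as HP.
    apply (CoreB_barbed _ _ _ (conj HP (fun X Y H a M X' Hl =>
             match H with ex_intro _ a0 (ex_intro _ b0 (conj H1 _)) => corr_outF _ _ _ _ _ H1 Hl end))).
    exists (ast_of C), (ast_of C'). split; [apply corr_init; auto|]. split; [apply corr_init; auto|].
    exists (xc C), (xc C'). split; [apply FA_init; auto|]. split; [apply FA_init; auto|].
    constructor; auto.
  - intros Hb.
    pose proof (transfer ext ast xstep astep (fun x a => FA a x)
                  (fun x a l x' H1 H2 H3 => FA2 x a l x' H1 H2 H3)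
                  (fun x a l a' H1 H2 H3 => FA1 a x l a' H1 H2 H3) Wa Wa_WB) as HX.
    apply (compl_ext _ HX).
    exists (ast_of C), (ast_of C'). split; [apply FA_init; auto|]. split; [apply FA_init; auto|].
    destruct Hb as (Rel & HB & HR).
    exists (tr_conf C), (tr_conf C'), Rel, 0. split; [apply corr_init; auto|]. split; [apply corr_init; auto|].
    auto.
Qed.
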